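(* Assume (H), (H1), and that $L$ has the KL-property at some $\bar z$, with associated $\eta\in(0,\infty]$, neighborhood $U$ and function $\varphi$. Let $\rho>0$ be such that $B(\bar z,\rho)\subset U$, let $C$ be a Lipschitz constant of $\nabla Q$ on $B(\bar z,\sqrt{2R}\rho)$, and $M=2r_+(C\sqrt{2R}+1/r_-)$. Let $(z_k)$ be generated by PAM from $z_0$, write $l_k=L(z_k)$, $\bar l=L(\bar z)$, and assume $\bar l<l_k<\bar l+\eta$ for all $k\ge0$ and $$M\varphi(l_0-\bar l)+2\sqrt{2r_+}\sqrt{l_0-\bar l}+\|z_0-\bar z\|_2<\rho.$$ Then $(z_k)$ converges to a critical point of $L$, and for all $k\ge0$: (i) $z_k\in B(\bar z,\rho)$; (ii) $\sum_{i=k+1}^\infty\|z_{i+1}-z_i\|_2\le M\varphi(l_k-\bar l)+\sqrt{2r_+}\sqrt{l_k-\bar l}$.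
   Context: Setting: $L(u^1,\dots,u^R,v^1,\dots,v^R)=\sum_{r=1}^Rf_r(u^r)+Q(u^1,\dots,v^R)+\sum_{r=1}^Rg_r(v^r)$ on $(\mathbb{R}^{n_1})^R\times(\mathbb{R}^{n_2})^R$. (H): $f_r,g_r$ proper lower semicontinuous with values in $\mathbb{R}\cup\{\infty\}$; $Q$ real-valued $C^1$ with $\nabla Q$ Lipschitz on bounded sets. (H1): $\inf L>-\infty$, $L(\cdot,u_0^2,\dots,v_0^R)$ proper, all proximal parameters $\lambda_k^r,\mu_k^r\in(r_-,r_+)$ for some $0<r_-<r_+$. PAM: for $k\ge0$, $r=1,\dots,R$ in order, $u_{k+1}^r\in\arg\min_u L(u_{k+1}^1,\dots,u_{k+1}^{r-1},u,u_k^{r+1},\dots,u_k^R,v_{k+1}^1,\dots,v_{k+1}^{r-1},v_k^r,\dots,v_k^R)+\frac{1}{2\lambda_k^r}\|u-u_k^r\|_2^2$, $v_{k+1}^r\in\arg\min_v L(u_{k+1}^1,\dots,u_{k+1}^r,u_k^{r+1},\dots,u_k^R,v_{k+1}^1,\dots,v_{k+1}^{r-1},v,v_k^{r+1},\dots,v_k^R)+\frac{1}{2\mu_k^r}\|v-v_k^r\|_2^2$; $z_k=(u_k^1,\dots,v_k^R)$. $\partial$ is the limiting subdifferential; critical points are $z$ with $0\in\partial L(z)$. KL-property: a proper lsc $f:\mathbb{R}^n\to\mathbb{R}\cup\{\infty\}$ has the KL-property at $\bar x\in\mathrm{dom}\,\partial f$ if there exist $\eta\in(0,\infty]$, a neighborhood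 $U$ of $\bar x$, and a continuous concave $\varphi:[0,\eta)\to[0,\infty)$ with $\varphi(0)=0$, $\varphi\in C^1(0,\eta)$, $\varphi'>0$ on $(0,\eta)$, such that $\varphi'(f(x)-f(\bar x))\,\mathrm{dist}(0,\partial f(x))\ge1$ for all $x\in U$ with $f(\bar x)<f(x)<f(\bar x)+\eta$. *)

(* Defs.v *)
From Stdlib Require Import Reals Lra Lia.
From Stdlib Require Vectors.Fin.
Open Scope R_scope.

Definition vec (n : nat) : Type := Fin.t n -> R.

Fixpoint fsum (n : nat) : (Fin.t n -> R) -> R :=
  match n return (Fin.t n -> R) -> R with
  | O => fun _ => 0
  | S m => fun f => f Fin.F1 + fsum m (fun i => f (Fin.FS i))
  end.

Definition vdot {n} (x y : vec n) : R := fsum n (fun i => x i * y i).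
Definition vsub {n} (x y : vec n) : vec n := fun i => x i - y i.
Definition vnorm2 {n} (x : vec n) : R := vdot x x.

Definition idx {m} (j : Fin.t m) : nat := proj1_sig (Fin.to_nat j).

(** Points z = (u^1,...,u^R, v^1,...,v^R) of (R^n1)^R x (R^n2)^R. *)
Definition pt (Rb n1 n2 : nat) : Type :=
  ((Fin.t Rb -> vec n1) * (Fin.t Rb -> vec n2))%type.

Section Pt.
Context {Rb n1 n2 : nat}.
Definition pdot (x y : pt Rb n1 n2) : R :=
  fsum Rb (fun r => vdot (fst x r) (fst y r)) + fsum Rb (fun r => vdot (snd x r) (snd y r)).
Definition psub (x y : pt Rb n1 n2) : pt Rb n1 n2 :=
  (fun r => vsub (fst x r) (fst y r), fun r => vsub (snd x r) (snd y r)).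
Definition pzero : pt Rb n1 n2 := (fun _ _ => 0, fun _ _ => 0).
Definition pnorm (x : pt Rb n1 n2) : R := sqrt (pdot x x).
End Pt.

(** Extended reals R U {+oo}: [None] stands for +oo. *)
Definition ereal : Type := option R.
Definition eplus (a b : ereal) : ereal :=
  match a, b with Some x, Some y => Some (x + y) | _, _ => None end.
Fixpoint efsum (n : nat) : (Fin.t n -> ereal) -> ereal :=
  match n return (Fin.t n -> ereal) -> ereal with
  | O => fun _ => Some 0
  | S m => fun f => eplus (f Fin.F1) (efsum m (fun i => f (Fin.FS i)))
  end.
Definition ele (a b : ereal) : Prop :=
  match a, b with
  | _, None => True
  | None, Some _ => False
  | Some x, Some y => x <= y
  end.
Definition ege (e : ereal) (c : R) : Prop := ele (Some c) e.
Definition egt (e : ereal) (c : R) : Prop :=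
  match e with None => True | Some x => c < x end.

(** proper: never -oo (automatic) and not identically +oo *)
Definition proper {X : Type} (f : X -> ereal) : Prop := exists x, f x <> None.

Definition lsc_wrt {X : Type} (dist : X -> X -> R) (f : X -> ereal) : Prop :=
  forall (x : X) (xs : nat -> X), Un_cv (fun k => dist (xs k) x) 0 ->
    forall c : R, egt (f x) c -> exists N, forall k, (N <= k)%nat -> egt (f (xs k)) c.

Definition vdist {n} (x y : vec n) : R := sqrt (vnorm2 (vsub x y)).
Definition pdist {Rb n1 n2} (x y : pt Rb n1 n2) : R := pnorm (psub x y).

(** Frechet subdifferential (unfolded liminf definition) *)
Definition frechet_sub {Rb n1 n2} (f : pt Rb n1 n2 -> ereal) (x w : pt Rb n1 n2) : Prop :=
  exists fx, f x = Some fx /\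
  forall eps, 0 < eps -> exists delta, 0 < delta /\
    forall y, pdist y x < delta ->
      ege (f y) (fx + pdot w (psub y x) - eps * pdist y x).

Definition limiting_sub {Rb n1 n2} (f : pt Rb n1 n2 -> ereal) (x w : pt Rb n1 n2) : Prop :=
  exists fx, f x = Some fx /\
  exists (xs ws : nat -> pt Rb n1 n2) (fs : nat -> R),
    (forall k, f (xs k) = Some (fs k)) /\
    Un_cv (fun k => pdist (xs k) x) 0 /\
    Un_cv fs fx /\
    (forall k, frechet_sub f (xs k) (ws k)) /\
    Un_cv (fun k => pdist (ws k) w) 0.

Definition below (eta : ereal) (s : R) : Prop :=
  match eta with None => True | Some e => s < e end.

Definition KL_at {Rb n1 n2} (f : pt Rb n1 n2 -> ereal) (xbar : pt Rb n1 n2)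
    (eta : ereal) (U : pt Rb n1 n2 -> Prop) (phi : R -> R) : Prop :=
  (exists w, limiting_sub f xbar w) /\
  (match eta with None => True | Some e => 0 < e end) /\
  (exists r, 0 < r /\ forall x, pdist x xbar < r -> U x) /\
  phi 0 = 0 /\
  (forall s, 0 <= s -> below eta s -> 0 <= phi s) /\
  (forall s, 0 <= s -> below eta s -> forall eps, 0 < eps -> exists delta, 0 < delta /\
      forall t, 0 <= t -> below eta t -> Rabs (t - s) < delta -> Rabs (phi t - phi s) < eps) /\
  (forall s t a, 0 <= s -> below eta s -> 0 <= t -> below eta t -> 0 <= a <= 1 ->
      a * phi s + (1 - a) * phi t <= phi (a * s + (1 - a) * t)) /\
  exists dphi : R -> R,
    (forall s, 0 < s -> below eta s -> derivable_pt_lim phi s (dphi s) /\ 0 < dphi s) /\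
    (forall s, 0 < s -> below eta s -> forall eps, 0 < eps -> exists delta, 0 < delta /\
        forall t, 0 < t -> below eta t -> Rabs (t - s) < delta -> Rabs (dphi t - dphi s) < eps) /\
    (* phi'(f x - f xbar) * dist(0, d f(x)) >= 1, with dist(0, emptyset) = +oo *)
    (forall x fx fb, U x -> f xbar = Some fb -> f x = Some fx ->
       fb < fx -> below eta (fx - fb) ->
       forall w, limiting_sub f x w -> 1 <= dphi (fx - fb) * pnorm w).

Definition Lfun {Rb n1 n2} (f : Fin.t Rb -> vec n1 -> ereal) (Q : pt Rb n1 n2 -> R)
    (g : Fin.t Rb -> vec n2 -> ereal) (z : pt Rb n1 n2) : ereal :=
  eplus (eplus (efsum Rb (fun r => f r (fst z r))) (Some (Q z)))
        (efsum Rb (fun r => g r (snd z r))).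

Definition is_C1_with_grad {Rb n1 n2} (Q : pt Rb n1 n2 -> R) (gQ : pt Rb n1 n2 -> pt Rb n1 n2) : Prop :=
  (forall x eps, 0 < eps -> exists delta, 0 < delta /\ forall y, pdist y x < delta ->
      Rabs (Q y - Q x - pdot (gQ x) (psub y x)) <= eps * pdist y x) /\
  (forall x eps, 0 < eps -> exists delta, 0 < delta /\ forall y, pdist y x < delta ->
      pdist (gQ y) (gQ x) < eps).

(** gradient Lipschitz on bounded sets (every bounded set lies in a closed ball) *)
Definition lip_on_bounded {Rb n1 n2} (gQ : pt Rb n1 n2 -> pt Rb n1 n2) : Prop :=
  forall (c : pt Rb n1 n2) (r : R), exists K, forall x y,
    pdist x c <= r -> pdist y c <= r -> pdist (gQ x) (gQ y) <= K * pdist x y.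

(** Intermediate points of a PAM sweep, built from z_k = zo and z_{k+1} = zn. *)
(* point (u_{k+1}^1..u_{k+1}^{r-1}, u, u_k^{r+1}..u_k^R, v_{k+1}^1..v_{k+1}^{r-1}, v_k^r..v_k^R) *)
Definition mix_u {Rb n1 n2} (zo zn : pt Rb n1 n2) (r : Fin.t Rb) (u : vec n1) : pt Rb n1 n2 :=
  (fun j => if Nat.ltb (idx j) (idx r) then fst zn j
            else if Nat.eqb (idx j) (idx r) then u else fst zo j,
   fun j => if Nat.ltb (idx j) (idx r) then snd zn j else snd zo j).
(* point (u_{k+1}^1..u_{k+1}^r, u_k^{r+1}..u_k^R, v_{k+1}^1..v_{k+1}^{r-1}, v, v_k^{r+1}..v_k^R) *)
Definition mix_v {Rb n1 n2} (zo zn : pt Rb n1 n2) (r : Fin.t Rb) (v : vec n2) : pt Rb n1 n2 :=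
  (fun j => if Nat.leb (idx j) (idx r) then fst zn j else fst zo j,
   fun j => if Nat.ltb (idx j) (idx r) then snd zn j
            else if Nat.eqb (idx j) (idx r) then v else snd zo j).

Definition is_argmin {X : Type} (h : X -> ereal) (x : X) : Prop :=
  forall y, ele (h x) (h y).

Definition PAM_seq {Rb n1 n2} (L : pt Rb n1 n2 -> ereal)
    (lam mu : nat -> Fin.t Rb -> R) (z : nat -> pt Rb n1 n2) : Prop :=
  forall (k : nat) (r : Fin.t Rb),
    is_argmin (fun u => eplus (L (mix_u (z k) (z (S k)) r u))
                 (Some (/ (2 * lam k r) * vnorm2 (vsub u (fst (z k) r)))))
              (fst (z (S k)) r) /\
    is_argmin (fun v => eplus (L (mix_v (z k) (z (S k)) r v))
                 (Some (/ (2 * mu k r) * vnorm2 (vsub v (snd (z k) r)))))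
              (snd (z (S k)) r).

Definition repl_u1 {Rb n1 n2} (z : pt Rb n1 n2) (u : vec n1) : pt Rb n1 n2 :=
  (fun j => if Nat.eqb (idx j) 0 then u else fst z j, snd z).

(* Main.v *)
Require Import Defs.
From Stdlib Require Import Reals Lra Lia Psatz FunctionalExtensionality.
From Stdlib Require Vectors.Fin.
Open Scope R_scope.

Lemma fsum_ext n (F G : Fin.t n -> R) : (forall i, F i = G i) -> fsum n F = fsum n G.
Proof. revert F G; induction n; simpl; intros F G H; [reflexivity|].
  rewrite H, (IHn (fun i => F (Fin.FS i)) (fun i => G (Fin.FS i))); auto. Qed.

Lemma fsum_add n (F G : Fin.t n -> R) : fsum n (fun i => F i + G i) = fsum n F + fsum n G.
Proof. revert F G; induction n; simpl; intros F G; [lra|].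
  rewrite (IHn (fun i => F (Fin.FS i)) (fun i => G (Fin.FS i))); lra. Qed.

Lemma fsum_scal n c (F : Fin.t n -> R) : fsum n (fun i => c * F i) = c * fsum n F.
Proof. revert F; induction n; simpl; intros F; [lra|].
  rewrite (IHn (fun i => F (Fin.FS i))); lra. Qed.

Lemma fsum_le n (F G : Fin.t n -> R) : (forall i, F i <= G i) -> fsum n F <= fsum n G.
Proof. revert F G; induction n; simpl; intros F G H; [lra|].
  specialize (IHn (fun i => F (Fin.FS i)) (fun i => G (Fin.FS i)) (fun i => H _)).
  specialize (H Fin.F1); lra. Qed.

Lemma fsum_const n c : fsum n (fun _ => c) = INR n * c.
Proof. induction n; simpl fsum; [simpl; lra|]. rewrite IHn, S_INR; lra. Qed.

Lemma fsum_nonneg n (F : Fin.t n -> R) : (forall i, 0 <= F i) -> 0 <= fsum n F.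
Proof. intros H. rewrite <- (Rmult_0_r (INR n)), <- fsum_const. apply fsum_le; auto. Qed.

Lemma fsum_sub n (F G : Fin.t n -> R) : fsum n (fun i => F i - G i) = fsum n F - fsum n G.
Proof. unfold Rminus. rewrite fsum_add.
  rewrite (fsum_ext _ (fun i => - G i) (fun i => -1 * G i)) by (intros; ring).
  rewrite fsum_scal; ring. Qed.

Definition idx_F1 n : idx (@Fin.F1 n) = 0%nat := eq_refl.
Lemma idx_FS n (i : Fin.t n) : idx (Fin.FS i) = S (idx i).
Proof. unfold idx; simpl. destruct (Fin.to_nat i); reflexivity. Qed.
Lemma idx_lt n (i : Fin.t n) : (idx i < n)%nat.
Proof. unfold idx. destruct (Fin.to_nat i); simpl; auto. Qed.
Lemma idx_inj n (i j : Fin.t n) : idx i = idx j -> i = j.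
Proof. apply Fin.to_nat_inj. Qed.
Lemma idx_of_nat p n (H : (p < n)%nat) : idx (Fin.of_nat_lt H) = p.
Proof. unfold idx. rewrite Fin.to_nat_of_nat. reflexivity. Qed.

Lemma fsum_term_le n (F : Fin.t n -> R) r : (forall i, 0 <= F i) -> F r <= fsum n F.
Proof. revert F r; induction n; intros F r H; [apply (Fin.case0 (fun _ => _) r)|].
  revert H; pattern r; apply Fin.caseS'; simpl.
  - intros H. pose proof (fsum_nonneg n (fun i => F (Fin.FS i)) (fun i => H _)); lra.
  - intros p H. pose proof (IHn (fun i => F (Fin.FS i)) p (fun i => H _)). specialize (H Fin.F1). lra. Qed.

Lemma fsum_single n (F : Fin.t n -> R) r : (forall j, idx j <> idx r -> F j = 0) -> fsum n F = F r.
Proof. revert F r; induction n; intros F r H; [apply (Fin.case0 (fun _ => _) r)|].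
  revert H; pattern r; apply Fin.caseS'; simpl.
  - intros H. rewrite (fsum_ext _ _ (fun _ => 0)). rewrite fsum_const; ring.
    intros i; apply H. rewrite idx_FS, idx_F1. lia.
  - intros p H. rewrite H by (rewrite idx_FS, idx_F1; lia).
    rewrite (IHn (fun i => F (Fin.FS i)) p); [ring|].
    intros j Hj; apply H. rewrite !idx_FS; lia. Qed.

Lemma fsum_idx_lt_S n (T : Fin.t n -> R) i (Hi : (i < n)%nat) :
  fsum n (fun j => if Nat.ltb (idx j) (S i) then T j else 0)
  = fsum n (fun j => if Nat.ltb (idx j) i then T j else 0) + T (Fin.of_nat_lt Hi).
Proof.
  set (r := Fin.of_nat_lt Hi).
  assert (E: fsum n (fun j => (if Nat.ltb (idx j) (S i) then T j else 0) - (if Nat.ltb (idx j) i then T j else 0)) = T r).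
  { rewrite (fsum_single _ _ r).
    - unfold r; rewrite idx_of_nat. rewrite Nat.ltb_irrefl. 
      assert (Nat.ltb i (S i) = true) by (apply Nat.ltb_lt; lia). rewrite H. fold r. ring.
    - intros j Hj. unfold r in Hj; rewrite idx_of_nat in Hj.
      destruct (Nat.ltb_spec (idx j) (S i)); destruct (Nat.ltb_spec (idx j) i); try lia; ring. }
  rewrite fsum_sub in E. lra. Qed.

Lemma fsum_idx_lt_n n (T : Fin.t n -> R) :
  fsum n (fun j => if Nat.ltb (idx j) n then T j else 0) = fsum n T.
Proof. apply fsum_ext; intros j. pose proof (idx_lt n j).
  destruct (Nat.ltb_spec (idx j) n); [reflexivity| lia]. Qed.

Lemma fsum_idx_lt_0 n (T : Fin.t n -> R) :
  fsum n (fun j => if Nat.ltb (idx j) 0 then T j else 0) = 0.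
Proof. rewrite (fsum_ext _ _ (fun _ => 0)); [rewrite fsum_const; ring|].
  intros j; destruct (Nat.ltb_spec (idx j) 0); [lia|reflexivity]. Qed.

Lemma fin_min n (S : Fin.t n -> R -> Prop) :
  (forall j, exists d, 0 < d /\ forall t, t < d -> S j t) ->
  exists d, 0 < d /\ forall j t, t < d -> S j t.
Proof. revert S; induction n; intros S H.
  - exists 1; split; [lra|]. intros j; apply (Fin.case0 (fun _ => _) j).
  - destruct (IHn (fun j => S (Fin.FS j)) (fun j => H _)) as [d1 [Hd1 H1]].
    destruct (H Fin.F1) as [d2 [Hd2 H2]].
    exists (Rmin d1 d2); split; [apply Rmin_pos; auto|].
    intros j; pattern j; apply Fin.caseS'.
    + intros t Ht; apply H2. pose proof (Rmin_r d1 d2); lra.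
    + intros p t Ht; apply H1. pose proof (Rmin_l d1 d2); lra. Qed.
Definition Ix (Rb n1 n2 : nat) := ((Fin.t Rb * Fin.t n1) + (Fin.t Rb * Fin.t n2))%type.
Definition PS {Rb n1 n2} (F : Ix Rb n1 n2 -> R) : R :=
  fsum Rb (fun r => fsum n1 (fun j => F (inl (r,j)))) + fsum Rb (fun r => fsum n2 (fun j => F (inr (r,j)))).
Definition coord {Rb n1 n2} (x : pt Rb n1 n2) (i : Ix Rb n1 n2) : R :=
  match i with inl (r,j) => fst x r j | inr (r,j) => snd x r j end.
Definition ofc {Rb n1 n2} (F : Ix Rb n1 n2 -> R) : pt Rb n1 n2 :=
  (fun r j => F (inl (r,j)), fun r j => F (inr (r,j))).
Definition Nm {Rb n1 n2} (F : Ix Rb n1 n2 -> R) : R := sqrt (PS (fun i => F i * F i)).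

Lemma coord_ofc {Rb n1 n2} (F : Ix Rb n1 n2 -> R) i : coord (ofc F) i = F i.
Proof. destruct i as [[r j]|[r j]]; reflexivity. Qed.
Lemma coord_eq {Rb n1 n2} (x y : pt Rb n1 n2) : (forall i, coord x i = coord y i) -> x = y.
Proof. intros H. destruct x as [a b], y as [c d]. f_equal; apply functional_extensionality; intros r;
  apply functional_extensionality; intros j; [apply (H (inl (r,j))) | apply (H (inr (r,j)))]. Qed.

Lemma pdot_PS {Rb n1 n2} (x y : pt Rb n1 n2) : pdot x y = PS (fun i => coord x i * coord y i).
Proof. reflexivity. Qed.
Lemma pdist_Nm {Rb n1 n2} (x y : pt Rb n1 n2) : pdist x y = Nm (fun i => coord x i - coord y i).
Proof. reflexivity. Qed.
Lemma pnorm_Nm {Rb n1 n2} (x : pt Rb n1 n2) : pnorm x = Nm (coord x).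
Proof. reflexivity. Qed.

Lemma PS_ext {Rb n1 n2} (F G : Ix Rb n1 n2 -> R) : (forall i, F i = G i) -> PS F = PS G.
Proof. intros H; unfold PS; f_equal; apply fsum_ext; intros; apply fsum_ext; intros; apply H. Qed.
Lemma PS_le {Rb n1 n2} (F G : Ix Rb n1 n2 -> R) : (forall i, F i <= G i) -> PS F <= PS G.
Proof. intros H; unfold PS; apply Rplus_le_compat; apply fsum_le; intros; apply fsum_le; intros; apply H. Qed.
Lemma PS_add {Rb n1 n2} (F G : Ix Rb n1 n2 -> R) : PS (fun i => F i + G i) = PS F + PS G.
Proof. unfold PS. rewrite (fsum_ext _ _ (fun r => fsum n1 (fun j => F (inl (r,j))) + fsum n1 (fun j => G (inl (r,j))))).
  rewrite (fsum_ext Rb (fun r => fsum n2 _) (fun r => fsum n2 (fun j => F (inr (r,j))) + fsum n2 (fun j => G (inr (r,j))))).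
  rewrite !fsum_add; ring. all: intros; apply fsum_add. Qed.
Lemma PS_scal {Rb n1 n2} c (F : Ix Rb n1 n2 -> R) : PS (fun i => c * F i) = c * PS F.
Proof. unfold PS. rewrite (fsum_ext _ _ (fun r => c * fsum n1 (fun j => F (inl (r,j))))).
  rewrite (fsum_ext Rb (fun r => fsum n2 _) (fun r => c * fsum n2 (fun j => F (inr (r,j))))).
  rewrite !fsum_scal; ring. all: intros; apply fsum_scal. Qed.
Lemma PS_nonneg {Rb n1 n2} (F : Ix Rb n1 n2 -> R) : (forall i, 0 <= F i) -> 0 <= PS F.
Proof. intros H. unfold PS. apply Rplus_le_le_0_compat; apply fsum_nonneg; intros; apply fsum_nonneg; intros; apply H. Qed.
Lemma PS_zero {Rb n1 n2} : PS (fun _ : Ix Rb n1 n2 => 0) = 0.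
Proof. unfold PS. rewrite (fsum_ext _ (fun _ => fsum n1 (fun _ => 0)) (fun _ => 0)).
  rewrite (fsum_ext _ (fun _ => fsum n2 (fun _ => 0)) (fun _ => 0)).
  rewrite fsum_const; ring. all: intros; rewrite fsum_const; ring. Qed.
Lemma PS_term_le {Rb n1 n2} (F : Ix Rb n1 n2 -> R) i : (forall i, 0 <= F i) -> F i <= PS F.
Proof. intros H. unfold PS. destruct i as [[r j]|[r j]].
  - pose proof (fsum_nonneg Rb (fun r => fsum n2 (fun j => F (inr (r,j)))) (fun r => fsum_nonneg _ _ (fun j => H _))).
    eapply Rle_trans; [|eapply Rle_trans; [apply (fsum_term_le Rb (fun r => fsum n1 (fun j => F (inl (r,j)))) r)|]].
    + apply (fsum_term_le n1 (fun j => F (inl (r,j))) j); intros; apply H.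
    + intros; apply fsum_nonneg; intros; apply H.
    + lra.
  - pose proof (fsum_nonneg Rb (fun r => fsum n1 (fun j => F (inl (r,j)))) (fun r => fsum_nonneg _ _ (fun j => H _))).
    eapply Rle_trans; [|eapply Rle_trans; [apply (fsum_term_le Rb (fun r => fsum n2 (fun j => F (inr (r,j)))) r)|]].
    + apply (fsum_term_le n2 (fun j => F (inr (r,j))) j); intros; apply H.
    + intros; apply fsum_nonneg; intros; apply H.
    + lra. Qed.

Lemma sq_nonneg' x : 0 <= x * x. Proof. nra. Qed.
Lemma PS_sq_nonneg {Rb n1 n2} (F : Ix Rb n1 n2 -> R) : 0 <= PS (fun i => F i * F i).
Proof. apply PS_nonneg; intros; apply sq_nonneg'. Qed.
Lemma Nm_nonneg {Rb n1 n2} (F : Ix Rb n1 n2 -> R) : 0 <= Nm F.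
Proof. apply sqrt_pos. Qed.
Lemma Nm_sq {Rb n1 n2} (F : Ix Rb n1 n2 -> R) : Nm F * Nm F = PS (fun i => F i * F i).
Proof. apply sqrt_sqrt, PS_sq_nonneg. Qed.

Lemma quad_lemma A X B : 0 <= B -> (forall t, 0 <= A + 2*t*X + t*t*B) -> X*X <= A*B.
Proof. intros HB H. destruct (Req_dec B 0) as [E|E].
  - subst B. destruct (Req_dec X 0) as [E|E]; [subst; nra|].
    specialize (H (-(A+1)/(2*X))).
    assert (A + 2 * (- (A + 1) / (2 * X)) * X + - (A + 1) / (2 * X) * (- (A + 1) / (2 * X)) * 0 = -1) by (field; auto).
    lra.
  - assert (0 < B) by lra. specialize (H (-X/B)).
    assert (A + 2 * (- X / B) * X + - X / B * (- X / B) * B = A - X*X/B) by (field; lra).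
    rewrite H1 in H. assert (X*X/B <= A) by lra.
    apply (Rmult_le_compat_r B) in H2; [|lra]. replace (X * X / B * B) with (X*X) in H2 by (field; lra). lra. Qed.

Lemma PS_CS {Rb n1 n2} (F G : Ix Rb n1 n2 -> R) :
  Rabs (PS (fun i => F i * G i)) <= Nm F * Nm G.
Proof.
  assert (Q: PS (fun i => F i * G i) * PS (fun i => F i * G i) <= PS (fun i => F i * F i) * PS (fun i => G i * G i)).
  { apply quad_lemma; [apply PS_sq_nonneg|]. intros t.
    replace (PS (fun i => F i * F i) + 2 * t * PS (fun i => F i * G i) + t * t * PS (fun i => G i * G i))
      with (PS (fun i => (F i + t * G i) * (F i + t * G i))); [apply PS_sq_nonneg|].
    rewrite <- !PS_scal, <- !PS_add. apply PS_ext; intros; ring. }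
  rewrite <- Nm_sq, <- Nm_sq in Q.
  pose proof (Nm_nonneg F); pose proof (Nm_nonneg G).
  set (X := PS (fun i => F i * G i)) in *. set (a := Nm F) in *. set (b := Nm G) in *.
  assert (0 <= a*b) by nra.
  destruct (Rle_dec 0 X).
  - rewrite Rabs_right by lra. nra.
  - rewrite Rabs_left by lra. nra. Qed.

Lemma sqrt_le_sq x y : 0 <= y -> 0 <= x -> x <= y * y -> sqrt x <= y.
Proof. intros Hy Hx H. rewrite <- (sqrt_square y) by auto. apply sqrt_le_1; auto; nra. Qed.

Lemma Nm_triangle {Rb n1 n2} (F G : Ix Rb n1 n2 -> R) : Nm (fun i => F i + G i) <= Nm F + Nm G.
Proof. unfold Nm at 1. apply sqrt_le_sq.
  - pose proof (Nm_nonneg F); pose proof (Nm_nonneg G); lra.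
  - apply PS_sq_nonneg.
  - pose proof (PS_CS F G). pose proof (Nm_sq F); pose proof (Nm_sq G).
    replace (PS (fun i => (F i + G i) * (F i + G i))) with
      (PS (fun i => F i * F i) + 2 * PS (fun i => F i * G i) + PS (fun i => G i * G i)).
    + pose proof (Rle_abs (PS (fun i => F i * G i))). nra.
    + rewrite <- PS_scal, <- !PS_add. apply PS_ext; intros; ring. Qed.

Lemma Nm_scal {Rb n1 n2} c (F : Ix Rb n1 n2 -> R) : Nm (fun i => c * F i) = Rabs c * Nm F.
Proof. unfold Nm. rewrite (PS_ext _ (fun i => (c*c) * (F i * F i))) by (intros; ring).
  rewrite PS_scal, sqrt_mult; [| nra | apply PS_sq_nonneg]. f_equal. apply sqrt_Rsqr_abs. Qed.

Lemma Nm_le {Rb n1 n2} (F G : Ix Rb n1 n2 -> R) : (forall i, F i * F i <= G i * G i) -> Nm F <= Nm G.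
Proof. intros H. apply sqrt_le_1; try apply PS_sq_nonneg. apply PS_le; auto. Qed.

Lemma Nm_sum_sq {Rb n1 n2} (F G H : Ix Rb n1 n2 -> R) :
  (forall i, F i * F i <= G i * G i + H i * H i) -> Nm F * Nm F <= Nm G * Nm G + Nm H * Nm H.
Proof. intros E. rewrite !Nm_sq, <- PS_add. apply PS_le; auto. Qed.

Lemma Nm_coord_le {Rb n1 n2} (F : Ix Rb n1 n2 -> R) i : Rabs (F i) <= Nm F.
Proof. unfold Nm. rewrite <- sqrt_Rsqr_abs. apply sqrt_le_1; [apply Rle_0_sqr|apply PS_sq_nonneg|].
  apply (PS_term_le (fun i => F i * F i)). intros; apply sq_nonneg'. Qed.

Lemma Nm_zero {Rb n1 n2} (F : Ix Rb n1 n2 -> R) i : Nm F = 0 -> F i = 0.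
Proof. intros H. pose proof (Nm_coord_le F i). rewrite H in H0. pose proof (Rabs_pos (F i)).
  destruct (Req_dec (F i) 0); auto. pose proof (Rabs_pos_lt _ H2). lra. Qed.

Lemma Nm_zero_fun {Rb n1 n2} : Nm (fun _ : Ix Rb n1 n2 => 0) = 0.
Proof. unfold Nm. rewrite (PS_ext _ (fun _ => 0)) by (intros; ring). rewrite PS_zero. apply sqrt_0. Qed.

Lemma Nm_ext {Rb n1 n2} (F G : Ix Rb n1 n2 -> R) : (forall i, F i = G i) -> Nm F = Nm G.
Proof. intros H; unfold Nm; f_equal; apply PS_ext; intros; rewrite H; ring. Qed.


Lemma Nm_opp {Rb n1 n2} (F : Ix Rb n1 n2 -> R) : Nm (fun i => - F i) = Nm F.
Proof. unfold Nm; f_equal; apply PS_ext; intros; ring. Qed.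

Lemma pdist_sym {Rb n1 n2} (x y : pt Rb n1 n2) : pdist x y = pdist y x.
Proof. rewrite !pdist_Nm. unfold Nm; f_equal; apply PS_ext; intros; ring. Qed.

Lemma pdist_tri {Rb n1 n2} (x y z : pt Rb n1 n2) : pdist x z <= pdist x y + pdist y z.
Proof. rewrite !pdist_Nm. eapply Rle_trans; [|apply Nm_triangle]. right; apply Nm_ext; intros; ring. Qed.

Lemma pdist_nonneg {Rb n1 n2} (x y : pt Rb n1 n2) : 0 <= pdist x y.
Proof. rewrite pdist_Nm; apply Nm_nonneg. Qed.

Lemma pdist_refl {Rb n1 n2} (x : pt Rb n1 n2) : pdist x x = 0.
Proof. rewrite pdist_Nm, <- (@Nm_zero_fun Rb n1 n2). apply Nm_ext; intros; ring. Qed.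

Lemma pdist_coord {Rb n1 n2} (x y : pt Rb n1 n2) i : Rabs (coord x i - coord y i) <= pdist x y.
Proof. rewrite pdist_Nm. apply (Nm_coord_le (fun i => coord x i - coord y i)). Qed.

Lemma pdist_zero_eq {Rb n1 n2} (x y : pt Rb n1 n2) : pdist x y = 0 -> x = y.
Proof. intros H. apply coord_eq. intros i. rewrite pdist_Nm in H. apply (Nm_zero _ i) in H. lra. Qed.

Lemma vdist_fst_le {Rb n1 n2} (x y : pt Rb n1 n2) r : vdist (fst x r) (fst y r) <= pdist x y.
Proof. unfold vdist, pdist, pnorm. apply sqrt_le_1.
  - apply fsum_nonneg; intros; apply sq_nonneg'.
  - apply (PS_sq_nonneg (fun i => coord x i - coord y i)).
  - unfold pdot. simpl. 
    pose proof (fsum_nonneg Rb (fun r => vdot (snd (psub x y) r) (snd (psub x y) r)) (fun r => fsum_nonneg _ _ (fun j => sq_nonneg' _))).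
    pose proof (fsum_term_le Rb (fun r => vdot (fst (psub x y) r) (fst (psub x y) r)) r (fun r => fsum_nonneg _ _ (fun j => sq_nonneg' _))).
    simpl in *. unfold vnorm2. lra. Qed.
Lemma vdist_snd_le {Rb n1 n2} (x y : pt Rb n1 n2) r : vdist (snd x r) (snd y r) <= pdist x y.
Proof. unfold vdist, pdist, pnorm. apply sqrt_le_1.
  - apply fsum_nonneg; intros; apply sq_nonneg'.
  - apply (PS_sq_nonneg (fun i => coord x i - coord y i)).
  - unfold pdot. simpl. 
    pose proof (fsum_nonneg Rb (fun r => vdot (fst (psub x y) r) (fst (psub x y) r)) (fun r => fsum_nonneg _ _ (fun j => sq_nonneg' _))).
    pose proof (fsum_term_le Rb (fun r => vdot (snd (psub x y) r) (snd (psub x y) r)) r (fun r => fsum_nonneg _ _ (fun j => sq_nonneg' _))).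
    simpl in *. unfold vnorm2. lra. Qed.

Lemma eplus_some_inv (a b : ereal) s : eplus a b = Some s -> exists x y, a = Some x /\ b = Some y /\ s = x + y.
Proof. destruct a as [x|], b as [y|]; simpl; intros H; try discriminate. inversion H; eauto. Qed.

Lemma efsum_some n (F : Fin.t n -> ereal) s : efsum n F = Some s ->
  exists b : Fin.t n -> R, (forall j, F j = Some (b j)) /\ s = fsum n b.
Proof. revert F s; induction n; simpl; intros F s H.
  - exists (fun _ => 0). split; [intros j; apply (Fin.case0 (fun _ => _) j)|]. inversion H; reflexivity.
  - apply eplus_some_inv in H as [x [y [H1 [H2 H3]]]].
    destruct (IHn _ _ H2) as [b [Hb Hs]].
    exists (fun j => match F j with Some x => x | None => 0 end). split.
    + intros j; pattern j; apply Fin.caseS'; [rewrite H1; reflexivity|].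
      intros p; rewrite Hb; reflexivity.
    + simpl. rewrite H1. rewrite H3, Hs. f_equal. apply fsum_ext. intros i; rewrite Hb; reflexivity. Qed.

Lemma efsum_of n (F : Fin.t n -> ereal) b : (forall j, F j = Some (b j)) -> efsum n F = Some (fsum n b).
Proof. revert F b; induction n; simpl; intros F b H; [reflexivity|].
  rewrite H, (IHn (fun i => F (Fin.FS i)) (fun i => b (Fin.FS i))); auto. Qed.

Lemma efsum_none n (F : Fin.t n -> ereal) r : F r = None -> efsum n F = None.
Proof. revert F r; induction n; intros F r H; [apply (Fin.case0 (fun _ => _) r)|].
  revert H; pattern r; apply Fin.caseS'; simpl.
  - intros H; rewrite H; reflexivity.
  - intros p H. rewrite (IHn (fun i => F (Fin.FS i)) p H). destruct (F Fin.F1); reflexivity. Qed.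

Lemma efsum_replace n (F F' : Fin.t n -> ereal) r s a :
  efsum n F = Some s -> F r = Some a -> (forall j, idx j <> idx r -> F' j = F j) ->
  efsum n F' = eplus (F' r) (Some (s - a)).
Proof. intros Hs Ha Hj. destruct (efsum_some _ _ _ Hs) as [b [Hb Hsb]].
  destruct (F' r) as [c|] eqn:Ec.
  - set (b' := fun j => if Nat.eqb (idx j) (idx r) then c else b j).
    rewrite (efsum_of _ _ b').
    + simpl. f_equal. rewrite Hsb.
      assert (fsum n (fun j => b' j - b j) = c - a).
      { rewrite (fsum_single _ _ r). unfold b'. rewrite Nat.eqb_refl.
        rewrite Hb in Ha. inversion Ha; reflexivity.
        intros j Hj'. unfold b'. apply Nat.eqb_neq in Hj'. rewrite Hj'. ring. }
      rewrite fsum_sub in H. lra.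
    + intros j. unfold b'. destruct (Nat.eqb_spec (idx j) (idx r)).
      * apply idx_inj in e; subst; auto.
      * rewrite Hj; auto.
  - rewrite (efsum_none _ _ r Ec). reflexivity. Qed.

Lemma ege_plus a b x y : ege a x -> ege b y -> ege (eplus a b) (x + y).
Proof. unfold ege, ele. destruct a as [u|], b as [v|]; simpl; auto; intros; lra. Qed.

Lemma efsum_ge n (F : Fin.t n -> ereal) b : (forall j, ege (F j) (b j)) -> ege (efsum n F) (fsum n b).
Proof. revert F b; induction n; simpl; intros F b H; [unfold ege, ele; lra|].
  apply ege_plus; auto. Qed.

Lemma eplus_assoc3 X a b t : eplus (eplus (eplus X (Some a)) (Some b)) (Some t) = eplus X (Some (a + b + t)).
Proof. destruct X; simpl; auto. f_equal; ring. Qed.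
Lemma eplus_assoc3' s q X t : eplus (eplus (Some s) (Some q)) (eplus X (Some t)) = eplus X (Some (s + q + t)).
Proof. destruct X; simpl; auto. f_equal; ring. Qed.

Lemma mix_u_r {Rb n1 n2} (zo zn : pt Rb n1 n2) r u : fst (mix_u zo zn r u) r = u.
Proof. simpl. rewrite Nat.ltb_irrefl, Nat.eqb_refl. reflexivity. Qed.
Lemma mix_v_r {Rb n1 n2} (zo zn : pt Rb n1 n2) r v : snd (mix_v zo zn r v) r = v.
Proof. simpl. rewrite Nat.ltb_irrefl, Nat.eqb_refl. reflexivity. Qed.
Lemma mix_u_j {Rb n1 n2} (zo zn : pt Rb n1 n2) r u u' j : idx j <> idx r -> fst (mix_u zo zn r u) j = fst (mix_u zo zn r u') j.
Proof. intros H. simpl. apply Nat.eqb_neq in H. rewrite H. reflexivity. Qed.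
Lemma mix_v_j {Rb n1 n2} (zo zn : pt Rb n1 n2) r u u' j : idx j <> idx r -> snd (mix_v zo zn r u) j = snd (mix_v zo zn r u') j.
Proof. intros H. simpl. apply Nat.eqb_neq in H. rewrite H. reflexivity. Qed.

Lemma vdot_zero_r n (a b : vec n) : vdot a (vsub b b) = 0.
Proof. unfold vdot, vsub. rewrite (fsum_ext _ _ (fun _ => 0)) by (intros; ring). rewrite fsum_const; ring. Qed.

Lemma mix_u_pdot {Rb n1 n2} (zo zn p : pt Rb n1 n2) r u u' :
  pdot p (psub (mix_u zo zn r u) (mix_u zo zn r u')) = vdot (fst p r) (vsub u u').
Proof. unfold pdot. simpl fst; simpl snd.
  rewrite (fsum_ext _ (fun r0 => vdot (snd p r0) _) (fun _ => 0)) by (intros; apply vdot_zero_r).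
  rewrite fsum_const, Rmult_0_r, Rplus_0_r.
  rewrite (fsum_single _ _ r).
  - rewrite Nat.ltb_irrefl, Nat.eqb_refl. reflexivity.
  - intros j Hj. pose proof (mix_u_j zo zn r u u' j Hj). simpl in H. rewrite H. apply vdot_zero_r. Qed.

Lemma mix_v_pdot {Rb n1 n2} (zo zn p : pt Rb n1 n2) r u u' :
  pdot p (psub (mix_v zo zn r u) (mix_v zo zn r u')) = vdot (snd p r) (vsub u u').
Proof. unfold pdot. simpl fst; simpl snd.
  rewrite (fsum_ext _ (fun r0 => vdot (fst p r0) _) (fun _ => 0)) by (intros; apply vdot_zero_r).
  rewrite fsum_const, Rmult_0_r, Rplus_0_l.
  rewrite (fsum_single _ _ r).
  - rewrite Nat.ltb_irrefl, Nat.eqb_refl. reflexivity.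
  - intros j Hj. pose proof (mix_v_j zo zn r u u' j Hj). simpl in H. rewrite H. apply vdot_zero_r. Qed.

Lemma mix_u_pdist {Rb n1 n2} (zo zn : pt Rb n1 n2) r u u' :
  pdist (mix_u zo zn r u) (mix_u zo zn r u') = vdist u u'.
Proof. unfold pdist, pnorm, vdist. f_equal. rewrite mix_u_pdot. simpl. rewrite Nat.ltb_irrefl, Nat.eqb_refl. reflexivity. Qed.
Lemma mix_v_pdist {Rb n1 n2} (zo zn : pt Rb n1 n2) r u u' :
  pdist (mix_v zo zn r u) (mix_v zo zn r u') = vdist u u'.
Proof. unfold pdist, pnorm, vdist. f_equal. rewrite mix_v_pdot. simpl. rewrite Nat.ltb_irrefl, Nat.eqb_refl. reflexivity. Qed.

Definition prefp {Rb n1 n2} (zo zn : pt Rb n1 n2) (m : nat) : pt Rb n1 n2 :=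
  (fun j => if Nat.ltb (2 * idx j) m then fst zn j else fst zo j,
   fun j => if Nat.ltb (2 * idx j + 1) m then snd zn j else snd zo j).

Ltac ltb_cases := repeat match goal with
  | |- context [Nat.ltb ?a ?b] => destruct (Nat.ltb_spec a b)
  | |- context [Nat.eqb ?a ?b] => destruct (Nat.eqb_spec a b)
  | |- context [Nat.leb ?a ?b] => destruct (Nat.leb_spec a b)
  end.

Lemma prefp_0 {Rb n1 n2} (zo zn : pt Rb n1 n2) : prefp zo zn 0 = zo.
Proof. destruct zo as [a b]. unfold prefp; simpl. f_equal; apply functional_extensionality; intros j; ltb_cases; auto; lia. Qed.
Lemma prefp_end {Rb n1 n2} (zo zn : pt Rb n1 n2) : prefp zo zn (2 * Rb) = zn.
Proof. destruct zn as [a b]. unfold prefp; simpl. f_equal; apply functional_extensionality; intros j;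
  pose proof (idx_lt _ j); ltb_cases; auto; lia. Qed.

Lemma prefp_u0 {Rb n1 n2} (zo zn : pt Rb n1 n2) r : mix_u zo zn r (fst zo r) = prefp zo zn (2 * idx r).
Proof. unfold prefp, mix_u. f_equal; apply functional_extensionality; intros j; ltb_cases; auto; try lia.
  apply idx_inj in e; subst; auto. Qed.
Lemma prefp_u1 {Rb n1 n2} (zo zn : pt Rb n1 n2) r : mix_u zo zn r (fst zn r) = prefp zo zn (2 * idx r + 1).
Proof. unfold prefp, mix_u. f_equal; apply functional_extensionality; intros j; ltb_cases; auto; try lia.
  apply idx_inj in e; subst; auto. Qed.
Lemma prefp_v0 {Rb n1 n2} (zo zn : pt Rb n1 n2) r : mix_v zo zn r (snd zo r) = prefp zo zn (2 * idx r + 1).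
Proof. unfold prefp, mix_v. f_equal; apply functional_extensionality; intros j; ltb_cases; auto; try lia.
  apply idx_inj in e; subst; auto. Qed.
Lemma prefp_v1 {Rb n1 n2} (zo zn : pt Rb n1 n2) r : mix_v zo zn r (snd zn r) = prefp zo zn (2 * idx r + 2).
Proof. unfold prefp, mix_v. f_equal; apply functional_extensionality; intros j; ltb_cases; auto; try lia.
  apply idx_inj in e; subst; auto. Qed.

Lemma mix_u_sq {Rb n1 n2} (zo zn x : pt Rb n1 n2) r u :
  (forall t, (u t - fst x r t) * (u t - fst x r t) <= (fst zo r t - fst x r t) * (fst zo r t - fst x r t) + (fst zn r t - fst x r t) * (fst zn r t - fst x r t)) ->
  forall i, (coord (mix_u zo zn r u) i - coord x i) * (coord (mix_u zo zn r u) i - coord x i)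
    <= (coord zo i - coord x i) * (coord zo i - coord x i) + (coord zn i - coord x i) * (coord zn i - coord x i).
Proof. intros H [[j t]|[j t]]; simpl; ltb_cases; try (pose proof (sq_nonneg' (fst zo j t - fst x j t)); pose proof (sq_nonneg' (fst zn j t - fst x j t)); lra);
  try (pose proof (sq_nonneg' (snd zo j t - snd x j t)); pose proof (sq_nonneg' (snd zn j t - snd x j t)); lra).
  apply idx_inj in e; subst; auto. Qed.
Lemma mix_v_sq {Rb n1 n2} (zo zn x : pt Rb n1 n2) r u :
  (forall t, (u t - snd x r t) * (u t - snd x r t) <= (snd zo r t - snd x r t) * (snd zo r t - snd x r t) + (snd zn r t - snd x r t) * (snd zn r t - snd x r t)) ->
  forall i, (coord (mix_v zo zn r u) i - coord x i) * (coord (mix_v zo zn r u) i - coord x i)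
    <= (coord zo i - coord x i) * (coord zo i - coord x i) + (coord zn i - coord x i) * (coord zn i - coord x i).
Proof. intros H [[j t]|[j t]]; simpl; ltb_cases; try (pose proof (sq_nonneg' (fst zo j t - fst x j t)); pose proof (sq_nonneg' (fst zn j t - fst x j t)); lra);
  try (pose proof (sq_nonneg' (snd zo j t - snd x j t)); pose proof (sq_nonneg' (snd zn j t - snd x j t)); lra).
  apply idx_inj in e; subst; auto. Qed.

Lemma pdist_sq_bound {Rb n1 n2} (m zo zn x : pt Rb n1 n2) :
  (forall i, (coord m i - coord x i) * (coord m i - coord x i)
    <= (coord zo i - coord x i) * (coord zo i - coord x i) + (coord zn i - coord x i) * (coord zn i - coord x i)) ->
  pdist m x * pdist m x <= pdist zo x * pdist zo x + pdist zn x * pdist zn x.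
Proof. intros H. rewrite !pdist_Nm. apply Nm_sum_sq. auto. Qed.

Lemma decomp_u {Rb n1 n2} f Q g (zo zn : pt Rb n1 n2) r u0 v :
  Lfun f Q g (mix_u zo zn r u0) = Some v ->
  exists c, forall u, Lfun f Q g (mix_u zo zn r u) = eplus (f r u) (Some (c + Q (mix_u zo zn r u))).
Proof. unfold Lfun. intros H.
  apply eplus_some_inv in H as [x [y [H1 [H2 _]]]].
  apply eplus_some_inv in H1 as [s [q [H3 [_ _]]]].
  destruct (efsum_some _ _ _ H3) as [b [Hb _]].
  exists (s - b r + y). intros u.
  rewrite (efsum_replace _ (fun j => f j (fst (mix_u zo zn r u0) j)) _ r s (b r) H3 (Hb r)).
  - rewrite mix_u_r. simpl snd in *. rewrite H2. rewrite eplus_assoc3. do 2 f_equal; ring.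
  - intros j Hj. f_equal. apply mix_u_j; auto. Qed.

Lemma decomp_v {Rb n1 n2} f Q g (zo zn : pt Rb n1 n2) r u0 v :
  Lfun f Q g (mix_v zo zn r u0) = Some v ->
  exists c, forall u, Lfun f Q g (mix_v zo zn r u) = eplus (g r u) (Some (c + Q (mix_v zo zn r u))).
Proof. unfold Lfun. intros H.
  apply eplus_some_inv in H as [x [y [H1 [H2 _]]]].
  apply eplus_some_inv in H1 as [s [q [H3 [_ _]]]].
  destruct (efsum_some _ _ _ H2) as [b [Hb _]].
  exists (s + y - b r). intros u.
  rewrite (efsum_replace _ (fun j => g j (snd (mix_v zo zn r u0) j)) (fun j => g j (snd (mix_v zo zn r u) j)) r y (b r) H2 (Hb r)).
  - rewrite mix_v_r. simpl fst in *. rewrite H3. rewrite eplus_assoc3'. do 2 f_equal; ring.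
  - intros j Hj. f_equal. apply mix_v_j; auto. Qed.
Lemma Rabs_le_inv x y : Rabs x <= y -> - y <= x <= y.
Proof. unfold Rabs; destruct (Rcase_abs x); lra. Qed.

Lemma vdist_sq n (a b : vec n) : vdist a b * vdist a b = vnorm2 (vsub a b).
Proof. unfold vdist. apply sqrt_sqrt. unfold vnorm2, vdot. apply fsum_nonneg; intros; apply sq_nonneg'. Qed.
Lemma vdist_nonneg n (a b : vec n) : 0 <= vdist a b.
Proof. apply sqrt_pos. Qed.

Lemma fermat_gen {Rb n1 n2 n} (Q : pt Rb n1 n2 -> R) (gQ : pt Rb n1 n2 -> pt Rb n1 n2)
  (HQ1 : forall x eps, 0 < eps -> exists delta, 0 < delta /\ forall y, pdist y x < delta ->
      Rabs (Q y - Q x - pdot (gQ x) (psub y x)) <= eps * pdist y x)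
  (m : vec n -> pt Rb n1 n2) (blk : pt Rb n1 n2 -> vec n) (phi : vec n -> ereal) (lamv : R) (uo us : vec n) (a : R) :
  0 < lamv ->
  (forall u, pdist (m u) (m us) = vdist u us) ->
  (forall u p, pdot p (psub (m u) (m us)) = vdot (blk p) (vsub u us)) ->
  (forall u b, phi u = Some b -> a + Q (m us) + / (2*lamv) * vnorm2 (vsub us uo) <= b + Q (m u) + /(2*lamv) * vnorm2 (vsub u uo)) ->
  forall eps, 0 < eps -> exists delta, 0 < delta /\ forall u, vdist u us < delta ->
   ege (phi u) (a + vdot (fun i => (uo i - us i) / lamv - blk (gQ (m us)) i) (vsub u us) - eps * vdist u us).
Proof.
  intros Hl Hd Hp Hk eps He.
  destruct (HQ1 (m us) (eps/2) ltac:(lra)) as [d1 [Hd1 H1]].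
  exists (Rmin d1 (lamv * eps)). split; [apply Rmin_pos; nra|].
  intros u Hu. unfold ege, ele. destruct (phi u) as [b|] eqn:Eb; [|exact I].
  specialize (Hk u b Eb).
  assert (Hu1 : pdist (m u) (m us) < d1) by (rewrite Hd; pose proof (Rmin_l d1 (lamv*eps)); lra).
  assert (Hu2 : vdist u us < lamv * eps) by (pose proof (Rmin_r d1 (lamv*eps)); lra).
  specialize (H1 _ Hu1). rewrite Hp, Hd in H1.
  apply Rabs_le_inv in H1.
  set (h := vsub u us) in *.
  assert (E1: vnorm2 (vsub u uo) - vnorm2 (vsub us uo) = 2 * fsum n (fun i => (us i - uo i) * h i) + vnorm2 h).
  { unfold vnorm2, vdot, h, vsub. rewrite <- fsum_sub, <- fsum_scal, <- fsum_add. apply fsum_ext; intros; ring. }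
  assert (E2: vdot (fun i => (uo i - us i) / lamv - blk (gQ (m us)) i) h
      = / lamv * fsum n (fun i => (uo i - us i) * h i) - vdot (blk (gQ (m us))) h).
  { unfold vdot. rewrite <- fsum_scal, <- fsum_sub. apply fsum_ext; intros; field; lra. }
  assert (E3: fsum n (fun i => (uo i - us i) * h i) = - fsum n (fun i => (us i - uo i) * h i)).
  { replace (- fsum n (fun i => (us i - uo i) * h i)) with (-1 * fsum n (fun i => (us i - uo i) * h i)) by ring.
    rewrite <- fsum_scal. apply fsum_ext; intros; ring. }
  rewrite E2, E3.
  pose proof (vdist_sq n u us). fold h in H.
  pose proof (vdist_nonneg n u us).
  assert (vnorm2 h <= vdist u us * (lamv * eps)) by nra.
  assert (/ (2 * lamv) * vnorm2 h <= eps / 2 * vdist u us).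
  { apply (Rmult_le_reg_l (2*lamv)); [lra|]. field_simplify; [|lra]. nra. }
  assert (/ (2 * lamv) * (vnorm2 (vsub u uo) - vnorm2 (vsub us uo)) =
     / lamv * fsum n (fun i => (us i - uo i) * h i) + / (2 * lamv) * vnorm2 h).
  { rewrite E1. field. lra. }
  nra. Qed.

Lemma le_eps_le x y c : 0 <= c -> (forall eps, 0 < eps -> x <= y + eps * c) -> x <= y.
Proof. intros Hc H. destruct (Rle_dec x y); auto.
  destruct (Req_dec c 0). { subst. specialize (H 1 ltac:(lra)). lra. }
  specialize (H ((x - y)/(2*c)) ltac:(apply Rdiv_lt_0_compat; lra)).
  replace ((x - y) / (2 * c) * c) with ((x-y)/2) in H by (field; auto). lra. Qed.

Lemma tangent (phi dphi : R -> R) (eta : ereal) s t :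
  (forall s t a, 0 <= s -> below eta s -> 0 <= t -> below eta t -> 0 <= a <= 1 ->
      a * phi s + (1 - a) * phi t <= phi (a * s + (1 - a) * t)) ->
  derivable_pt_lim phi s (dphi s) ->
  0 <= s -> below eta s -> 0 <= t -> below eta t ->
  phi t <= phi s + dphi s * (t - s).
Proof.
  intros Hc Hd Hs Hes Ht Het.
  destruct (Req_dec t s) as [E|E]; [subst; lra|].
  assert (Hts: 0 < Rabs (t - s)) by (apply Rabs_pos_lt; lra).
  cut (phi t - phi s <= dphi s * (t - s)); [lra|].
  apply (le_eps_le _ _ (Rabs (t - s))); [lra|]. intros eps He.
  destruct (Hd eps He) as [[del Hdel] Hh]. simpl in Hh.
  set (a := Rmin 1 (del / (2 * Rabs (t - s)))).
  assert (Ha0 : 0 < a) by (apply Rmin_pos; [lra| apply Rdiv_lt_0_compat; lra]).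
  assert (Ha1 : a <= 1) by apply Rmin_l.
  assert (Ha2 : a <= del / (2 * Rabs (t - s))) by apply Rmin_r.
  set (h := a * (t - s)).
  assert (Hh0 : h <> 0) by (unfold h; intros Z; apply Rmult_integral in Z; destruct Z; lra).
  assert (Hhd : Rabs h < del).
  { unfold h. rewrite Rabs_mult, Rabs_right by lra.
    apply (Rmult_le_compat_r (Rabs (t - s))) in Ha2; [|lra].
    replace (del / (2 * Rabs (t - s)) * Rabs (t - s)) with (del/2) in Ha2 by (field; lra). lra. }
  specialize (Hh h Hh0 Hhd).
  specialize (Hc t s a Ht Het Hs Hes (conj (Rlt_le _ _ Ha0) Ha1)).
  replace (a * t + (1 - a) * s) with (s + h) in Hc by (unfold h; ring).
  set (q := (phi (s + h) - phi s) / h) in Hh.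
  assert (Eq : phi (s + h) - phi s = q * h) by (unfold q; field; auto).
  assert (Hq : q * (t - s) <= dphi s * (t - s) + eps * Rabs (t - s)).
  { apply Rabs_def2 in Hh. destruct Hh.
    destruct (Rle_dec 0 (t - s)).
    - rewrite Rabs_right by lra. nra.
    - rewrite Rabs_left by lra. nra. }
  assert (a * (phi t - phi s) <= a * (q * (t - s))).
  { assert (a * (phi t - phi s) <= phi (s + h) - phi s) by lra. rewrite Eq in H. unfold h in H. lra. }
  apply Rmult_le_reg_l in H; auto. lra. Qed.
Definition LS (A : nat -> ereal) (a : ereal) := forall c, egt a c -> exists N, forall k, (N <= k)%nat -> egt (A k) c.
Definition US (A : nat -> ereal) (a : R) := forall eps, 0 < eps -> exists N, forall k, (N <= k)%nat -> ele (A k) (Some (a + eps)).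

Lemma split_egt a b c : egt (eplus a b) c -> exists c1 c2, c1 + c2 = c /\ egt a c1 /\ egt b c2.
Proof. destruct a as [x|], b as [y|]; simpl; intros H.
  - exists (x - (x + y - c)/2), (y - (x+y-c)/2). repeat split; lra.
  - exists (x - 1), (c - x + 1). repeat split; lra.
  - exists (c - y + 1), (y - 1). repeat split; lra.
  - exists c, 0. repeat split; lra. Qed.

Lemma egt_plus a b c1 c2 : egt a c1 -> egt b c2 -> egt (eplus a b) (c1 + c2).
Proof. destruct a as [x|], b as [y|]; simpl; auto. intros; lra. Qed.

Lemma LS_plus A B a b : LS A a -> LS B b -> LS (fun k => eplus (A k) (B k)) (eplus a b).
Proof. intros HA HB c Hc. destruct (split_egt _ _ _ Hc) as [c1 [c2 [E [H1 H2]]]].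
  destruct (HA _ H1) as [N1 HN1]. destruct (HB _ H2) as [N2 HN2].
  exists (N1 + N2)%nat. intros k Hk. rewrite <- E. apply egt_plus; [apply HN1|apply HN2]; lia. Qed.

Lemma LS_efsum n (F : nat -> Fin.t n -> ereal) G :
  (forall j, LS (fun k => F k j) (G j)) -> LS (fun k => efsum n (F k)) (efsum n G).
Proof. revert F G; induction n; intros F G H; simpl.
  - intros c Hc. exists 0%nat. intros; auto.
  - apply LS_plus; [apply H|]. apply (IHn (fun k i => F k (Fin.FS i)) (fun i => G (Fin.FS i))). intros; apply H. Qed.

Lemma LS_cv u x : Un_cv u x -> LS (fun k => Some (u k)) (Some x).
Proof. intros H c Hc. simpl in Hc. destruct (H (x - c) ltac:(lra)) as [N HN]. exists N. intros k Hk.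
  specialize (HN k Hk). unfold R_dist in HN. simpl. apply Rabs_def2 in HN. lra. Qed.

Lemma ele_plus a b x y : ele a (Some x) -> ele b (Some y) -> ele (eplus a b) (Some (x + y)).
Proof. destruct a as [u|], b as [v|]; simpl; auto; intros; lra. Qed.

Lemma US_plus A B a b : US A a -> US B b -> US (fun k => eplus (A k) (B k)) (a + b).
Proof. intros HA HB eps He. destruct (HA (eps/2) ltac:(lra)) as [N1 HN1]. destruct (HB (eps/2) ltac:(lra)) as [N2 HN2].
  exists (N1 + N2)%nat. intros k Hk. replace (a + b + eps) with ((a + eps/2) + (b + eps/2)) by field.
  apply ele_plus; [apply HN1|apply HN2]; lia. Qed.

Lemma US_efsum n (F : nat -> Fin.t n -> ereal) a :
  (forall j, US (fun k => F k j) (a j)) -> US (fun k => efsum n (F k)) (fsum n a).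
Proof. revert F a; induction n; intros F a H; simpl.
  - intros eps He. exists 0%nat. intros; simpl; lra.
  - apply US_plus; [apply H|]. apply (IHn (fun k i => F k (Fin.FS i)) (fun i => a (Fin.FS i))). intros; apply H. Qed.

Lemma US_cv u x : Un_cv u x -> US (fun k => Some (u k)) x.
Proof. intros H eps He. destruct (H eps He) as [N HN]. exists N. intros k Hk.
  specialize (HN k Hk). unfold R_dist in HN. simpl. apply Rabs_def2 in HN. lra. Qed.

Lemma cv_const c : Un_cv (fun _ => c) c.
Proof. intros eps He. exists 0%nat. intros. unfold R_dist. rewrite Rminus_diag, Rabs_R0. lra. Qed.

Lemma fsum_cv n (F : nat -> Fin.t n -> R) G :
  (forall i, Un_cv (fun k => F k i) (G i)) -> Un_cv (fun k => fsum n (F k)) (fsum n G).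
Proof. revert F G; induction n; intros F G H; simpl.
  - apply cv_const.
  - apply CV_plus; [apply H|]. apply (IHn (fun k i => F k (Fin.FS i)) (fun i => G (Fin.FS i))). intros; apply H. Qed.

Lemma PS_cv {Rb n1 n2} (F : nat -> Ix Rb n1 n2 -> R) G :
  (forall i, Un_cv (fun k => F k i) (G i)) -> Un_cv (fun k => PS (F k)) (PS G).
Proof. intros H. unfold PS. apply CV_plus; apply fsum_cv; intros r; apply fsum_cv; intros j; apply H. Qed.

Lemma sqrt_cv0 u : (forall k, 0 <= u k) -> Un_cv u 0 -> Un_cv (fun k => sqrt (u k)) 0.
Proof. intros Hp H eps He. destruct (H (eps*eps) ltac:(nra)) as [N HN]. exists N. intros k Hk.
  specialize (HN k Hk). unfold R_dist in *. rewrite Rminus_0_r in *. rewrite Rabs_right in HN by (specialize (Hp k); lra).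
  rewrite Rabs_right by (apply Rle_ge, sqrt_pos). rewrite <- (sqrt_square eps) by lra.
  apply sqrt_lt_1; auto; nra. Qed.

Lemma mono_cv u B : (forall n, u n <= u (S n)) -> (forall n, u n <= B) -> exists s, Un_cv u s /\ s <= B.
Proof. intros Hg Hb. destruct (growing_cv u) as [s Hs].
  - intros n; apply Hg.
  - exists B. intros x [i Hi]. subst; auto.
  - exists s; split; auto. destruct (Rle_dec s B); auto.
    destruct (Hs (s - B) ltac:(lra)) as [N HN]. specialize (HN N (le_n _)). unfold R_dist in HN.
    apply Rabs_def2 in HN. specialize (Hb N). lra. Qed.

Lemma cv_le_const u s B : Un_cv u s -> (forall n, u n <= B) -> s <= B.
Proof. intros Hs Hb. destruct (Rle_dec s B); auto.
    destruct (Hs (s - B) ltac:(lra)) as [N HN]. specialize (HN N (le_n _)). unfold R_dist in HN.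
    apply Rabs_def2 in HN. specialize (Hb N). lra. Qed.

Lemma cv_pdist_Q {Rb n1 n2} (Q : pt Rb n1 n2 -> R) (gQ : pt Rb n1 n2 -> pt Rb n1 n2)
  (HQ1 : forall x eps, 0 < eps -> exists delta, 0 < delta /\ forall y, pdist y x < delta ->
      Rabs (Q y - Q x - pdot (gQ x) (psub y x)) <= eps * pdist y x)
  (y : nat -> pt Rb n1 n2) x : Un_cv (fun k => pdist (y k) x) 0 -> Un_cv (fun k => Q (y k)) (Q x).
Proof. intros H eps He.
  destruct (HQ1 x 1 ltac:(lra)) as [d [Hd Hx]].
  set (K := pnorm (gQ x) + 1).
  assert (HK : 1 <= K) by (unfold K; pose proof (Nm_nonneg (coord (gQ x))); rewrite pnorm_Nm; lra).
  destruct (H (Rmin d (eps / K)) ltac:(apply Rmin_pos; [lra|apply Rdiv_lt_0_compat; lra])) as [N HN].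
  exists N. intros k Hk. specialize (HN k Hk). unfold R_dist in *. rewrite Rminus_0_r in HN.
  rewrite Rabs_right in HN by (apply Rle_ge, pdist_nonneg).
  specialize (Hx (y k) ltac:(pose proof (Rmin_l d (eps/K)); lra)).
  pose proof (PS_CS (coord (gQ x)) (fun i => coord (y k) i - coord x i)).
  assert (Hcs: Rabs (pdot (gQ x) (psub (y k) x)) <= pnorm (gQ x) * pdist (y k) x) by exact H0. clear H0.
  assert (Rabs (Q (y k) - Q x) <= K * pdist (y k) x).
  { unfold K. pose proof (Rabs_triang (Q (y k) - Q x - pdot (gQ x) (psub (y k) x)) (pdot (gQ x) (psub (y k) x))) as T.
    replace (Q (y k) - Q x - pdot (gQ x) (psub (y k) x) + pdot (gQ x) (psub (y k) x)) with (Q (y k) - Q x) in T by ring.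
    lra. }
  pose proof (Rmin_r d (eps/K)) as T2.
  assert (T3: K * pdist (y k) x < K * (eps / K)) by (apply Rmult_lt_compat_l; lra).
  replace (K * (eps/K)) with eps in T3 by (field; lra). lra. Qed.

Fixpoint nsum (n : nat) (a : nat -> R) : R := match n with O => 0 | S m => nsum m a + a m end.
Lemma nsum_shift n a : nsum (S n) a = a 0%nat + nsum n (fun j => a (S j)).
Proof. induction n; simpl in *; [ring|]. rewrite IHn. ring. Qed.
Lemma sum_nsum a N : sum_f_R0 a N = nsum (S N) a.
Proof. induction N; simpl in *; [ring|]. rewrite IHN. reflexivity. Qed.
Lemma nsum_nonneg n a : (forall j, 0 <= a j) -> 0 <= nsum n a.
Proof. intros H; induction n; simpl; [lra|]. specialize (H n); lra. Qed.
Definition hu {Rb n1 n2} f Q g (zo zn : pt Rb n1 n2) r (lv : R) :=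
  fun u => eplus (Lfun f Q g (mix_u zo zn r u)) (Some (/ (2 * lv) * vnorm2 (vsub u (fst zo r)))).
Definition hv {Rb n1 n2} f Q g (zo zn : pt Rb n1 n2) r (lv : R) :=
  fun v => eplus (Lfun f Q g (mix_v zo zn r v)) (Some (/ (2 * lv) * vnorm2 (vsub v (snd zo r)))).

Lemma vnorm2_self n (a : vec n) : vnorm2 (vsub a a) = 0.
Proof. unfold vnorm2. apply vdot_zero_r. Qed.
Lemma vnorm2_nonneg n (a : vec n) : 0 <= vnorm2 a.
Proof. unfold vnorm2, vdot. apply fsum_nonneg; intros; apply sq_nonneg'. Qed.

Lemma keys_u {Rb n1 n2} f Q g (zo zn : pt Rb n1 n2) r lv v0 :
  Lfun f Q g (mix_u zo zn r (fst zo r)) = Some v0 ->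
  is_argmin (hu f Q g zo zn r lv) (fst zn r) ->
  exists v1 a, Lfun f Q g (mix_u zo zn r (fst zn r)) = Some v1 /\
    v1 + / (2 * lv) * vnorm2 (vsub (fst zn r) (fst zo r)) <= v0 /\ f r (fst zn r) = Some a /\
    forall u b, f r u = Some b -> a + Q (mix_u zo zn r (fst zn r)) + / (2 * lv) * vnorm2 (vsub (fst zn r) (fst zo r))
        <= b + Q (mix_u zo zn r u) + / (2 * lv) * vnorm2 (vsub u (fst zo r)).
Proof. intros H0 Ha.
  pose proof (Ha (fst zo r)) as H1. unfold hu in H1 at 2. rewrite H0, vnorm2_self in H1.
  destruct (hu f Q g zo zn r lv (fst zn r)) as [w|] eqn:Ew; [|simpl in H1; contradiction].
  unfold hu in Ew. apply eplus_some_inv in Ew as [v1 [p [E1 [E2 E3]]]]. inversion E2; subst p.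
  destruct (decomp_u f Q g zo zn r _ _ E1) as [c Hc].
  pose proof (Hc (fst zn r)) as Hs. rewrite E1 in Hs. symmetry in Hs.
  apply eplus_some_inv in Hs as [a [q [F1 [F2 F3]]]]. inversion F2; subst q.
  exists v1, a. repeat split; auto.
  - simpl in H1. lra.
  - intros u b Hb. pose proof (Ha u) as H2. unfold hu in H2. rewrite E1 in H2. rewrite (Hc u), Hb in H2.
    simpl in H2. lra. Qed.

Lemma keys_v {Rb n1 n2} f Q g (zo zn : pt Rb n1 n2) r lv v0 :
  Lfun f Q g (mix_v zo zn r (snd zo r)) = Some v0 ->
  is_argmin (hv f Q g zo zn r lv) (snd zn r) ->
  exists v1 a, Lfun f Q g (mix_v zo zn r (snd zn r)) = Some v1 /\
    v1 + / (2 * lv) * vnorm2 (vsub (snd zn r) (snd zo r)) <= v0 /\ g r (snd zn r) = Some a /\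
    forall u b, g r u = Some b -> a + Q (mix_v zo zn r (snd zn r)) + / (2 * lv) * vnorm2 (vsub (snd zn r) (snd zo r))
        <= b + Q (mix_v zo zn r u) + / (2 * lv) * vnorm2 (vsub u (snd zo r)).
Proof. intros H0 Ha.
  pose proof (Ha (snd zo r)) as H1. unfold hv in H1 at 2. rewrite H0, vnorm2_self in H1.
  destruct (hv f Q g zo zn r lv (snd zn r)) as [w|] eqn:Ew; [|simpl in H1; contradiction].
  unfold hv in Ew. apply eplus_some_inv in Ew as [v1 [p [E1 [E2 E3]]]]. inversion E2; subst p.
  destruct (decomp_v f Q g zo zn r _ _ E1) as [c Hc].
  pose proof (Hc (snd zn r)) as Hs. rewrite E1 in Hs. symmetry in Hs.
  apply eplus_some_inv in Hs as [a [q [F1 [F2 F3]]]]. inversion F2; subst q.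
  exists v1, a. repeat split; auto.
  - simpl in H1. lra.
  - intros u b Hb. pose proof (Ha u) as H2. unfold hv in H2. rewrite E1 in H2. rewrite (Hc u), Hb in H2.
    simpl in H2. lra. Qed.

Definition argmins {Rb n1 n2} f Q g (zo zn : pt Rb n1 n2) (lk mk : Fin.t Rb -> R) :=
  forall r, is_argmin (hu f Q g zo zn r (lk r)) (fst zn r) /\ is_argmin (hv f Q g zo zn r (mk r)) (snd zn r).

Definition blk2 {Rb n1 n2} (zo zn : pt Rb n1 n2) (r : Fin.t Rb) :=
  vnorm2 (vsub (fst zn r) (fst zo r)) + vnorm2 (vsub (snd zn r) (snd zo r)).

Lemma step_chain {Rb n1 n2} f Q g (zo zn : pt Rb n1 n2) lk mk rp lo :
  argmins f Q g zo zn lk mk -> (forall r, 0 < lk r < rp) -> (forall r, 0 < mk r < rp) ->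
  Lfun f Q g zo = Some lo ->
  forall i, (i <= Rb)%nat -> exists v, Lfun f Q g (prefp zo zn (2 * i)) = Some v /\
    v + / (2 * rp) * fsum Rb (fun j => if Nat.ltb (idx j) i then blk2 zo zn j else 0) <= lo.
Proof. intros HA Hl Hm Ho. induction i; intros Hi.
  - exists lo. rewrite Nat.mul_0_r, prefp_0, fsum_idx_lt_0. split; auto. lra.
  - destruct (IHi ltac:(lia)) as [v [Hv Hle]].
    assert (Hlt : (i < Rb)%nat) by lia.
    set (r := Fin.of_nat_lt Hlt).
    assert (Er : idx r = i) by apply idx_of_nat.
    destruct (HA r) as [Au Av].
    rewrite <- Er, <- prefp_u0 in Hv.
    destruct (keys_u f Q g zo zn r _ _ Hv Au) as [v1 [a [E1 [L1 _]]]].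
    rewrite prefp_u1, <- prefp_v0 in E1.
    destruct (keys_v f Q g zo zn r (mk r) _ E1 Av) as [v2 [b [E2 [L2 _]]]].
    exists v2. rewrite prefp_v1 in E2. replace (2 * S i)%nat with (2 * idx r + 2)%nat by lia. split; auto.
    rewrite (fsum_idx_lt_S _ _ i Hlt). fold r.
    unfold blk2 in *. specialize (Hl r); specialize (Hm r).
    pose proof (vnorm2_nonneg _ (vsub (fst zn r) (fst zo r))).
    pose proof (vnorm2_nonneg _ (vsub (snd zn r) (snd zo r))).
    assert (/ (2 * rp) * vnorm2 (vsub (fst zn r) (fst zo r)) <= / (2 * lk r) * vnorm2 (vsub (fst zn r) (fst zo r))).
    { apply Rmult_le_compat_r; auto. apply Rinv_le_contravar; lra. }
    assert (/ (2 * rp) * vnorm2 (vsub (snd zn r) (snd zo r)) <= / (2 * mk r) * vnorm2 (vsub (snd zn r) (snd zo r))).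
    { apply Rmult_le_compat_r; auto. apply Rinv_le_contravar; lra. }
    lra. Qed.

Lemma pdist_sq_blk {Rb n1 n2} (zo zn : pt Rb n1 n2) : pdist zn zo * pdist zn zo = fsum Rb (blk2 zo zn).
Proof. unfold pdist, pnorm. rewrite sqrt_sqrt.
  - unfold pdot, blk2. rewrite fsum_add. reflexivity.
  - apply (PS_sq_nonneg (fun i => coord zn i - coord zo i)). Qed.

Lemma step_decrease {Rb n1 n2} f Q g (zo zn : pt Rb n1 n2) lk mk rp lo ln :
  argmins f Q g zo zn lk mk -> (forall r, 0 < lk r < rp) -> (forall r, 0 < mk r < rp) ->
  Lfun f Q g zo = Some lo -> Lfun f Q g zn = Some ln ->
  ln + / (2 * rp) * (pdist zn zo * pdist zn zo) <= lo.
Proof. intros HA Hl Hm Ho Hn.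
  destruct (step_chain f Q g zo zn lk mk rp lo HA Hl Hm Ho Rb (le_n _)) as [v [Hv Hle]].
  rewrite prefp_end, Hn in Hv. inversion Hv; subst v.
  rewrite fsum_idx_lt_n in Hle. rewrite pdist_sq_blk. lra. Qed.

Lemma step_keys {Rb n1 n2} f Q g (zo zn : pt Rb n1 n2) lk mk rp lo :
  argmins f Q g zo zn lk mk -> (forall r, 0 < lk r < rp) -> (forall r, 0 < mk r < rp) ->
  Lfun f Q g zo = Some lo -> forall r,
  (exists a, f r (fst zn r) = Some a /\
    forall u b, f r u = Some b -> a + Q (mix_u zo zn r (fst zn r)) + / (2 * lk r) * vnorm2 (vsub (fst zn r) (fst zo r))
        <= b + Q (mix_u zo zn r u) + / (2 * lk r) * vnorm2 (vsub u (fst zo r))) /\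
  (exists a, g r (snd zn r) = Some a /\
    forall u b, g r u = Some b -> a + Q (mix_v zo zn r (snd zn r)) + / (2 * mk r) * vnorm2 (vsub (snd zn r) (snd zo r))
        <= b + Q (mix_v zo zn r u) + / (2 * mk r) * vnorm2 (vsub u (snd zo r))).
Proof. intros HA Hl Hm Ho r.
  destruct (step_chain f Q g zo zn lk mk rp lo HA Hl Hm Ho (idx r) ltac:(pose proof (idx_lt _ r); lia)) as [v [Hv _]].
  destruct (HA r) as [Au Av].
  rewrite <- prefp_u0 in Hv.
  destruct (keys_u f Q g zo zn r _ _ Hv Au) as [v1 [a [E1 [L1 [Fa Ka]]]]].
  split; [eauto|].
  rewrite prefp_u1, <- prefp_v0 in E1.
  destruct (keys_v f Q g zo zn r _ _ E1 Av) as [v2 [b [E2 [L2 [Fb Kb]]]]]. eauto. Qed.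
Definition wvec {Rb n1 n2} (gQ : pt Rb n1 n2 -> pt Rb n1 n2) (zo zn : pt Rb n1 n2) (lk mk : Fin.t Rb -> R) : pt Rb n1 n2 :=
 (fun r i => (fst zo r i - fst zn r i) / lk r - fst (gQ (mix_u zo zn r (fst zn r))) r i + fst (gQ zn) r i,
  fun r i => (snd zo r i - snd zn r i) / mk r - snd (gQ (mix_v zo zn r (snd zn r))) r i + snd (gQ zn) r i).

Lemma ege_mono a x y : ege a x -> y <= x -> ege a y.
Proof. unfold ege, ele; destruct a; auto; intros; lra. Qed.

Lemma vdot_add_l n (a b c : vec n) : vdot (fun i => a i + b i) c = vdot a c + vdot b c.
Proof. unfold vdot. rewrite <- fsum_add. apply fsum_ext; intros; ring. Qed.

Lemma fsum_vdist_le {Rb n1 n2} (y zn : pt Rb n1 n2) :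
  fsum Rb (fun r => vdist (fst y r) (fst zn r)) <= INR Rb * pdist y zn /\
  fsum Rb (fun r => vdist (snd y r) (snd zn r)) <= INR Rb * pdist y zn.
Proof. split; rewrite <- fsum_const; apply fsum_le; intros; [apply vdist_fst_le|apply vdist_snd_le]. Qed.

Lemma step_frechet {Rb n1 n2} f Q g (gQ : pt Rb n1 n2 -> pt Rb n1 n2)
  (HQ1 : forall x eps, 0 < eps -> exists delta, 0 < delta /\ forall y, pdist y x < delta ->
      Rabs (Q y - Q x - pdot (gQ x) (psub y x)) <= eps * pdist y x)
  (zo zn : pt Rb n1 n2) lk mk rp lo ln :
  argmins f Q g zo zn lk mk -> (forall r, 0 < lk r < rp) -> (forall r, 0 < mk r < rp) ->
  Lfun f Q g zo = Some lo -> Lfun f Q g zn = Some ln ->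
  frechet_sub (Lfun f Q g) zn (wvec gQ zo zn lk mk).
Proof.
  intros HA Hl Hm Ho Hn.
  pose proof (step_keys f Q g zo zn lk mk rp lo HA Hl Hm Ho) as HK.
  pose proof Hn as Hn'. unfold Lfun in Hn'.
  apply eplus_some_inv in Hn' as [x [yy [X1 [X2 X3]]]].
  apply eplus_some_inv in X1 as [s [q [X4 [X5 X6]]]]. inversion X5; subst q.
  destruct (efsum_some _ _ _ X4) as [bf [Hbf Hs]].
  destruct (efsum_some _ _ _ X2) as [bg [Hbg Hyy]].
  exists ln; split; auto. intros eps He.
  pose proof (pos_INR Rb) as HR.
  set (e' := eps / (2 * INR Rb + 1)).
  assert (He' : 0 < e') by (apply Rdiv_lt_0_compat; lra).
  set (su := fun r i => (fst zo r i - fst zn r i) / lk r - fst (gQ (mix_u zo zn r (fst zn r))) r i).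
  set (sv := fun r i => (snd zo r i - snd zn r i) / mk r - snd (gQ (mix_v zo zn r (snd zn r))) r i).
  assert (Hblk : forall r, exists d, 0 < d /\ forall t, t < d ->
     (forall u, vdist u (fst zn r) = t -> ege (f r u) (bf r + vdot (su r) (vsub u (fst zn r)) - e' * vdist u (fst zn r))) /\
     (forall v, vdist v (snd zn r) = t -> ege (g r v) (bg r + vdot (sv r) (vsub v (snd zn r)) - e' * vdist v (snd zn r)))).
  { intros r. destruct (HK r) as [[a [Ea Ka]] [b [Eb Kb]]].
    rewrite Hbf in Ea; inversion Ea; subst a. rewrite Hbg in Eb; inversion Eb; subst b.
    destruct (fermat_gen Q gQ HQ1 (mix_u zo zn r) (fun p => fst p r) (f r) (lk r) (fst zo r) (fst zn r) (bf r)
      ltac:(specialize (Hl r); lra) (fun u => mix_u_pdist zo zn r u (fst zn r)) (fun u p => mix_u_pdot zo zn p r u (fst zn r))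
      Ka e' He') as [d1 [Hd1 H1]].
    destruct (fermat_gen Q gQ HQ1 (mix_v zo zn r) (fun p => snd p r) (g r) (mk r) (snd zo r) (snd zn r) (bg r)
      ltac:(specialize (Hm r); lra) (fun u => mix_v_pdist zo zn r u (snd zn r)) (fun u p => mix_v_pdot zo zn p r u (snd zn r))
      Kb e' He') as [d2 [Hd2 H2]].
    exists (Rmin d1 d2). split; [apply Rmin_pos; auto|]. intros t Ht.
    pose proof (Rmin_l d1 d2); pose proof (Rmin_r d1 d2).
    split; intros u Hu; [apply H1 | apply H2]; lra. }
  destruct (fin_min _ _ Hblk) as [dF [HdF HF]].
  destruct (HQ1 zn e' He') as [dQ [HdQ HQz]].
  exists (Rmin dF dQ). split; [apply Rmin_pos; auto|]. intros y Hy.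
  pose proof (Rmin_l dF dQ); pose proof (Rmin_r dF dQ).
  assert (G1 : ege (efsum Rb (fun r => f r (fst y r)))
      (fsum Rb (fun r => bf r + vdot (su r) (vsub (fst y r) (fst zn r)) - e' * vdist (fst y r) (fst zn r)))).
  { apply efsum_ge. intros r. apply (HF r (vdist (fst y r) (fst zn r))); auto.
    pose proof (vdist_fst_le y zn r); lra. }
  assert (G2 : ege (efsum Rb (fun r => g r (snd y r)))
      (fsum Rb (fun r => bg r + vdot (sv r) (vsub (snd y r) (snd zn r)) - e' * vdist (snd y r) (snd zn r)))).
  { apply efsum_ge. intros r. apply (HF r (vdist (snd y r) (snd zn r))); auto.
    pose proof (vdist_snd_le y zn r); lra. }
  assert (G3 : ege (Some (Q y)) (Q zn + pdot (gQ zn) (psub y zn) - e' * pdist y zn)).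
  { specialize (HQz y ltac:(lra)). apply Rabs_le_inv in HQz. unfold ege, ele. lra. }
  pose proof (ege_plus _ _ _ _ (ege_plus _ _ _ _ G1 G3) G2) as G. fold (Lfun f Q g y) in G.
  eapply ege_mono; [exact G|].
  rewrite !fsum_sub, !fsum_add, !fsum_scal.
  destruct (fsum_vdist_le y zn) as [V1 V2].
  assert (EW : pdot (wvec gQ zo zn lk mk) (psub y zn) =
     fsum Rb (fun r => vdot (su r) (vsub (fst y r) (fst zn r))) + fsum Rb (fun r => vdot (sv r) (vsub (snd y r) (snd zn r)))
     + pdot (gQ zn) (psub y zn)).
  { unfold pdot. simpl.
    rewrite (fsum_ext _ (fun r => vdot _ _) (fun r => vdot (su r) (vsub (fst y r) (fst zn r)) + vdot (fst (gQ zn) r) (vsub (fst y r) (fst zn r))))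
      by (intros; apply vdot_add_l).
    rewrite (fsum_ext _ (fun r => vdot (fun i => _ + snd (gQ zn) r i) _) (fun r => vdot (sv r) (vsub (snd y r) (snd zn r)) + vdot (snd (gQ zn) r) (vsub (snd y r) (snd zn r))))
      by (intros; apply vdot_add_l).
    rewrite !fsum_add. ring. }
  rewrite EW, X3, X6, Hs, Hyy.
  assert (e' * (2 * INR Rb + 1) = eps) by (unfold e'; field; lra).
  pose proof (pdist_nonneg y zn).
  nra. Qed.
Lemma wvec_bound {Rb n1 n2} (gQ : pt Rb n1 n2 -> pt Rb n1 n2) (zo zn : pt Rb n1 n2) lk mk rm G :
  0 < rm -> (forall r, rm < lk r) -> (forall r, rm < mk r) -> 0 <= G ->
  (forall r, pdist (gQ zn) (gQ (mix_u zo zn r (fst zn r))) <= G) ->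
  (forall r, pdist (gQ zn) (gQ (mix_v zo zn r (snd zn r))) <= G) ->
  pnorm (wvec gQ zo zn lk mk) <= sqrt (2 * INR Rb) * G + / rm * pdist zn zo.
Proof.
  intros Hrm Hl Hm HG Hu Hv.
  set (A := fun i : Ix Rb n1 n2 => match i with inl (r,t) => (fst zo r t - fst zn r t) / lk r | inr (r,t) => (snd zo r t - snd zn r t) / mk r end).
  set (B := fun i : Ix Rb n1 n2 => match i with
     | inl (r,t) => fst (gQ zn) r t - fst (gQ (mix_u zo zn r (fst zn r))) r t
     | inr (r,t) => snd (gQ zn) r t - snd (gQ (mix_v zo zn r (snd zn r))) r t end).
  rewrite pnorm_Nm. rewrite (Nm_ext _ (fun i => A i + B i)) by (intros [[r t]|[r t]]; simpl; ring).
  eapply Rle_trans; [apply Nm_triangle|].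
  assert (NA : Nm A <= / rm * pdist zn zo).
  { rewrite pdist_sym, pdist_Nm, <- (Rabs_right (/ rm)) by (apply Rle_ge, Rlt_le, Rinv_0_lt_compat; auto).
    rewrite <- Nm_scal. apply Nm_le. intros [[r t]|[r t]]; simpl.
    - specialize (Hl r). set (d := fst zo r t - fst zn r t).
      assert (d / lk r * (d / lk r) = (d*d) * (/ lk r * / lk r)) by (field; lra).
      assert (/ rm * d * (/ rm * d) = (d*d) * (/ rm * / rm)) by ring.
      rewrite H, H0. apply Rmult_le_compat_l; [apply sq_nonneg'|].
      assert (0 < / lk r <= / rm) by (split; [apply Rinv_0_lt_compat; lra| apply Rinv_le_contravar; lra]). nra.
    - specialize (Hm r). set (d := snd zo r t - snd zn r t).
      assert (d / mk r * (d / mk r) = (d*d) * (/ mk r * / mk r)) by (field; lra).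
      assert (/ rm * d * (/ rm * d) = (d*d) * (/ rm * / rm)) by ring.
      rewrite H, H0. apply Rmult_le_compat_l; [apply sq_nonneg'|].
      assert (0 < / mk r <= / rm) by (split; [apply Rinv_0_lt_compat; lra| apply Rinv_le_contravar; lra]). nra. }
  assert (NB : Nm B <= sqrt (2 * INR Rb) * G).
  { unfold Nm. rewrite <- (sqrt_square G) by auto. rewrite <- sqrt_mult by (pose proof (pos_INR Rb); nra).
    apply sqrt_le_1; [apply PS_sq_nonneg| pose proof (pos_INR Rb); nra|].
    unfold PS. simpl.
    assert (forall r, fsum n1 (fun j => (fst (gQ zn) r j - fst (gQ (mix_u zo zn r (fst zn r))) r j) * (fst (gQ zn) r j - fst (gQ (mix_u zo zn r (fst zn r))) r j)) <= G * G).
    { intros r. pose proof (vdist_fst_le (gQ zn) (gQ (mix_u zo zn r (fst zn r))) r). specialize (Hu r).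
      pose proof (vdist_sq _ (fst (gQ zn) r) (fst (gQ (mix_u zo zn r (fst zn r))) r)).
      pose proof (vdist_nonneg _ (fst (gQ zn) r) (fst (gQ (mix_u zo zn r (fst zn r))) r)).
      unfold vnorm2, vdot, vsub in H0. rewrite <- H0. nra. }
    assert (forall r, fsum n2 (fun j => (snd (gQ zn) r j - snd (gQ (mix_v zo zn r (snd zn r))) r j) * (snd (gQ zn) r j - snd (gQ (mix_v zo zn r (snd zn r))) r j)) <= G * G).
    { intros r. pose proof (vdist_snd_le (gQ zn) (gQ (mix_v zo zn r (snd zn r))) r). specialize (Hv r).
      pose proof (vdist_sq _ (snd (gQ zn) r) (snd (gQ (mix_v zo zn r (snd zn r))) r)).
      pose proof (vdist_nonneg _ (snd (gQ zn) r) (snd (gQ (mix_v zo zn r (snd zn r))) r)).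
      unfold vnorm2, vdot, vsub in H1. rewrite <- H1. nra. }
    pose proof (fsum_le _ _ _ H). pose proof (fsum_le _ _ _ H0). rewrite fsum_const in H1, H2.
    lra. }
  lra. Qed.
Lemma frechet_limiting {Rb n1 n2} (L : pt Rb n1 n2 -> ereal) x w : frechet_sub L x w -> limiting_sub L x w.
Proof. intros H. destruct H as [fx [Hx Hf]]. exists fx; split; auto.
  exists (fun _ => x), (fun _ => w), (fun _ => fx). repeat split; auto.
  - rewrite pdist_refl. apply cv_const.
  - apply cv_const.
  - intros k. exists fx; split; auto.
  - rewrite pdist_refl. apply cv_const. Qed.

Lemma pdist_R0 {n1 n2} (x y : pt 0 n1 n2) : pdist x y = 0.
Proof. unfold pdist, pnorm, pdot. simpl. rewrite Rplus_0_r. apply sqrt_0. Qed.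

Lemma cv_shift u l : Un_cv u l -> Un_cv (fun k => u (S k)) l.
Proof. intros H eps He. destruct (H eps He) as [N HN]. exists N. intros; apply HN; lia. Qed.

Lemma cv0_le a b : (forall k, 0 <= a k <= b k) -> Un_cv b 0 -> Un_cv a 0.
Proof. intros H Hb eps He. destruct (Hb eps He) as [N HN]. exists N. intros k Hk.
  specialize (HN k Hk). specialize (H k). unfold R_dist in *. rewrite Rminus_0_r in *.
  rewrite Rabs_right in * by lra. lra. Qed.

Lemma mix_cv {Rb n1 n2} (y : nat -> pt Rb n1 n2) x a b :
  (forall k, pdist (y k) x * pdist (y k) x <= a k * a k + b k * b k) -> (forall k, 0 <= a k) -> (forall k, 0 <= b k) ->
  Un_cv a 0 -> Un_cv b 0 -> Un_cv (fun k => pdist (y k) x) 0.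
Proof. intros H Ha Hb Ca Cb. apply (cv0_le _ (fun k => a k + b k)).
  - intros k; split; [apply pdist_nonneg|]. specialize (H k); specialize (Ha k); specialize (Hb k).
    pose proof (pdist_nonneg (y k) x). nra.
  - replace 0 with (0 + 0) by ring. apply CV_plus; auto. Qed.

Lemma pdist_pzero {Rb n1 n2} (w : pt Rb n1 n2) : pdist w pzero = pnorm w.
Proof. rewrite pdist_Nm, pnorm_Nm. apply Nm_ext. intros [[r t]|[r t]]; simpl; ring. Qed.

Lemma chain_dist {Rb n1 n2} (z : nat -> pt Rb n1 n2) x n :
  pdist (z n) x <= pdist (z 0%nat) x + nsum n (fun k => pdist (z (S k)) (z k)).
Proof. induction n; simpl; [lra|]. pose proof (pdist_tri (z (S n)) (z n) x). lra. Qed.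

Lemma chain_dist2 {Rb n1 n2} (z : nat -> pt Rb n1 n2) n m : (n <= m)%nat ->
  pdist (z m) (z n) <= nsum m (fun k => pdist (z (S k)) (z k)) - nsum n (fun k => pdist (z (S k)) (z k)).
Proof. intros H. induction H.
  - rewrite pdist_refl. lra.
  - simpl. pose proof (pdist_tri (z (S m)) (z m) (z n)). lra. Qed.

Lemma nsum_mono n m a : (forall j, 0 <= a j) -> (n <= m)%nat -> nsum n a <= nsum m a.
Proof. intros Ha H; induction H; simpl; [lra|]. specialize (Ha m); lra. Qed.

Lemma cv_minus_const u c : Un_cv u c -> Un_cv (fun k => u k - c) 0.
Proof. intros H. replace 0 with (c - c) by ring. apply CV_minus; auto. apply cv_const. Qed.

Lemma cv_abs0 u : Un_cv u 0 -> Un_cv (fun k => Rabs (u k)) 0.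
Proof. intros H eps He. destruct (H eps He) as [N HN]. exists N. intros k Hk. specialize (HN k Hk).
  unfold R_dist in *. rewrite Rminus_0_r in *. rewrite Rabs_Rabsolu. auto. Qed.

Lemma mixu_zn {Rb n1 n2} (zo zn x : pt Rb n1 n2) r :
  pdist (mix_u zo zn r (fst zn r)) x * pdist (mix_u zo zn r (fst zn r)) x <= pdist zo x * pdist zo x + pdist zn x * pdist zn x.
Proof. apply pdist_sq_bound, mix_u_sq. intros t. pose proof (sq_nonneg' (fst zo r t - fst x r t)). lra. Qed.
Lemma mixv_zn {Rb n1 n2} (zo zn x : pt Rb n1 n2) r :
  pdist (mix_v zo zn r (snd zn r)) x * pdist (mix_v zo zn r (snd zn r)) x <= pdist zo x * pdist zo x + pdist zn x * pdist zn x.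
Proof. apply pdist_sq_bound, mix_v_sq. intros t. pose proof (sq_nonneg' (snd zo r t - snd x r t)). lra. Qed.
Lemma mixu_x {Rb n1 n2} (zo zn x : pt Rb n1 n2) r :
  pdist (mix_u zo zn r (fst x r)) x * pdist (mix_u zo zn r (fst x r)) x <= pdist zo x * pdist zo x + pdist zn x * pdist zn x.
Proof. apply pdist_sq_bound, mix_u_sq. intros t. pose proof (sq_nonneg' (fst zo r t - fst x r t)).
  pose proof (sq_nonneg' (fst zn r t - fst x r t)). replace (fst x r t - fst x r t) with 0 by ring. lra. Qed.
Lemma mixv_x {Rb n1 n2} (zo zn x : pt Rb n1 n2) r :
  pdist (mix_v zo zn r (snd x r)) x * pdist (mix_v zo zn r (snd x r)) x <= pdist zo x * pdist zo x + pdist zn x * pdist zn x.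
Proof. apply pdist_sq_bound, mix_v_sq. intros t. pose proof (sq_nonneg' (snd zo r t - snd x r t)).
  pose proof (sq_nonneg' (snd zn r t - snd x r t)). replace (snd x r t - snd x r t) with 0 by ring. lra. Qed.

Lemma nsum_ext n a b : (forall j, a j = b j) -> nsum n a = nsum n b.
Proof. intros H; induction n; simpl; auto. rewrite IHn, H; auto. Qed.

Theorem mainTheorem13
  (Rb n1 n2 : nat)
  (f : Fin.t Rb -> vec n1 -> ereal) (g : Fin.t Rb -> vec n2 -> ereal)
  (Q : pt Rb n1 n2 -> R) (gQ : pt Rb n1 n2 -> pt Rb n1 n2)
  (* (H) *)
  (Hf : forall r, proper (f r) /\ lsc_wrt vdist (f r))
  (Hg : forall r, proper (g r) /\ lsc_wrt vdist (g r))
  (HQ : is_C1_with_grad Q gQ)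
  (HQlip : lip_on_bounded gQ)
  (* PAM data *)
  (z : nat -> pt Rb n1 n2) (lam mu : nat -> Fin.t Rb -> R) (rm rp : R)
  (* (H1) *)
  (Hinf : exists m : R, forall w, ege (Lfun f Q g w) m)
  (Hprop0 : proper (fun u => Lfun f Q g (repl_u1 (z 0%nat) u)))
  (Hr : 0 < rm < rp)
  (Hlam : forall k r, rm < lam k r < rp)
  (Hmu : forall k r, rm < mu k r < rp)
  (HPAM : PAM_seq (Lfun f Q g) lam mu z)
  (* KL property at zbar *)
  (zbar : pt Rb n1 n2) (eta : ereal) (U : pt Rb n1 n2 -> Prop) (phi : R -> R)
  (HKL : KL_at (Lfun f Q g) zbar eta U phi)
  (rho : R) (Hrho : 0 < rho)
  (HU : forall x, pdist x zbar < rho -> U x)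
  (C : R)
  (HC : forall x y, pdist x zbar < sqrt (2 * INR Rb) * rho -> pdist y zbar < sqrt (2 * INR Rb) * rho ->
          pdist (gQ x) (gQ y) <= C * pdist x y)
  (lbar : R) (l : nat -> R)
  (Hlbar : Lfun f Q g zbar = Some lbar)
  (Hl : forall k, Lfun f Q g (z k) = Some (l k))
  (Hlk : forall k, lbar < l k /\ below eta (l k - lbar))
  (Hsmall : 2 * rp * (C * sqrt (2 * INR Rb) + / rm) * phi (l 0%nat - lbar)
            + 2 * sqrt (2 * rp) * sqrt (l 0%nat - lbar) + pdist (z 0%nat) zbar < rho) :
  (exists zs : pt Rb n1 n2,
      Un_cv (fun k => pdist (z k) zs) 0 /\ limiting_sub (Lfun f Q g) zs pzero) /\
  (forall k : nat,
      pdist (z k) zbar < rho /\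
      exists s : R,
        infinite_sum (fun j => pdist (z (k + 2 + j)%nat) (z (k + 1 + j)%nat)) s /\
        s <= 2 * rp * (C * sqrt (2 * INR Rb) + / rm) * phi (l k - lbar)
             + sqrt (2 * rp) * sqrt (l k - lbar)).
Proof.
  destruct HQ as [HQ1 HQ2].
  destruct HKL as [_ [Heta [_ [Hphi0 [Hphipos [_ [Hconc [dphi [Hdphi [_ HKLi]]]]]]]]]].
  set (L := Lfun f Q g) in *.
  set (d := fun k => pdist (z (S k)) (z k)).
  assert (Hdn : forall k, 0 <= d k) by (intros; apply pdist_nonneg).
  assert (HA : forall k, argmins f Q g (z k) (z (S k)) (lam k) (mu k)) by (intros k r; apply HPAM).
  assert (Hl' : forall k r, 0 < lam k r < rp) by (intros k r; specialize (Hlam k r); lra).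
  assert (Hm' : forall k r, 0 < mu k r < rp) by (intros k r; specialize (Hmu k r); lra).
  assert (SD : forall k, l (S k) + / (2 * rp) * (d k * d k) <= l k).
  { intros k. apply (step_decrease f Q g (z k) (z (S k)) (lam k) (mu k) rp); auto. }
  assert (Hrp : 0 < rp) by lra.
  assert (DEC : forall k, l (S k) <= l k).
  { intros k. specialize (SD k). pose proof (Hdn k). assert (0 <= / (2*rp)) by (apply Rlt_le, Rinv_0_lt_compat; lra). nra. }
  assert (Dbound : forall k, d k <= sqrt (2 * rp) * sqrt (l k - lbar)).
  { intros k. rewrite <- sqrt_mult by (try lra; destruct (Hlk k); lra).
    rewrite <- (sqrt_square (d k)) by auto. apply sqrt_le_1; [nra| destruct (Hlk k); nra|].
    specialize (SD k). destruct (Hlk (S k)).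
    assert (d k * d k = 2 * rp * (/ (2 * rp) * (d k * d k))) by (field; lra). nra. }
  assert (D0pos : 0 < pdist (z 0%nat) zbar).
  { destruct (Req_dec (pdist (z 0%nat) zbar) 0) as [E|E]; [|pose proof (pdist_nonneg (z 0%nat) zbar); lra].
    apply pdist_zero_eq in E. pose proof (Hl 0%nat). fold L in H. rewrite E, Hlbar in H. inversion H.
    destruct (Hlk 0%nat). lra. }
  assert (HRb : (1 <= Rb)%nat).
  { destruct (Nat.eq_dec Rb 0) as [E|E]; [|lia]. exfalso. subst Rb. rewrite pdist_R0 in D0pos. lra. }
  assert (HRb' : 1 <= INR Rb) by (apply (le_INR 1); auto).
  set (rad := sqrt (2 * INR Rb) * rho).
  assert (Hrad : sqrt 2 * rho <= rad).
  { unfold rad. apply Rmult_le_compat_r; [lra|]. apply sqrt_le_1; lra. }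
  assert (Hs2 : 1 <= sqrt 2) by (rewrite <- sqrt_1; apply sqrt_le_1; lra).
  assert (Cpos : 0 <= C).
  { set (D0 := pdist (z 0%nat) zbar) in *.
    set (t := rad / (2 * D0)).
    assert (Ht : 0 < t) by (unfold t, rad; apply Rdiv_lt_0_compat; [apply Rmult_lt_0_compat; [apply sqrt_lt_R0|]|]; lra).
    set (y := ofc (fun i => coord zbar i + t * (coord (z 0%nat) i - coord zbar i))).
    assert (Ey : pdist y zbar = rad / 2).
    { rewrite pdist_Nm. rewrite (Nm_ext _ (fun i => t * (coord (z 0%nat) i - coord zbar i))).
      - rewrite Nm_scal, <- pdist_Nm. fold D0. rewrite Rabs_right by lra. unfold t. field. lra.
      - intros i. unfold y. rewrite coord_ofc. ring. }
    assert (Hrr : 0 < rad) by nra.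
    assert (Q1 : pdist zbar zbar < rad) by (rewrite pdist_refl; lra).
    assert (Q2 : pdist y zbar < rad) by lra.
    pose proof (HC zbar y Q1 Q2).
    rewrite (pdist_sym zbar y), Ey in H. pose proof (pdist_nonneg (gQ zbar) (gQ y)). nra. }
  set (K := C * sqrt (2 * INR Rb) + / rm).
  assert (HK : 0 < K).
  { unfold K. pose proof (sqrt_pos (2 * INR Rb)). pose proof (Rinv_0_lt_compat rm ltac:(lra)). nra. }
  set (M := 2 * rp * K).
  assert (HM : 0 <= M) by (unfold M; nra).
  replace (2 * rp * (C * sqrt (2 * INR Rb) + / rm)) with M in * by reflexivity.
  set (B := fun k => pdist (z k) zbar < rho).
  assert (SG : forall k, B k -> B (S k) -> frechet_sub L (z (S k)) (wvec gQ (z k) (z (S k)) (lam k) (mu k)) /\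
              pnorm (wvec gQ (z k) (z (S k)) (lam k) (mu k)) <= K * d k).
  { intros k Bk Bk1. split.
    - apply (step_frechet f Q g gQ HQ1 (z k) (z (S k)) (lam k) (mu k) rp (l k) (l (S k))); auto.
    - eapply Rle_trans; [apply (wvec_bound gQ (z k) (z (S k)) (lam k) (mu k) rm (C * d k)); try lra|].
      + intros r; apply Hlam.
      + intros r; apply Hmu.
      + pose proof (Hdn k); nra.
      + intros r. set (m := mix_u (z k) (z (S k)) r (fst (z (S k)) r)).
        assert (Hm1 : pdist m zbar < rad).
        { pose proof (mixu_zn (z k) (z (S k)) zbar r). fold m in H.
          unfold B in Bk, Bk1. pose proof (pdist_nonneg m zbar). pose proof (pdist_nonneg (z k) zbar). pose proof (pdist_nonneg (z (S k)) zbar).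
          assert (pdist m zbar < sqrt 2 * rho); [|lra].
          rewrite <- (sqrt_square (pdist m zbar)) by auto. rewrite <- (sqrt_square rho) by lra. rewrite <- sqrt_mult by nra.
          apply sqrt_lt_1; nra. }
        assert (Hm2 : pdist (z (S k)) m <= d k).
        { pose proof (mixu_zn (z k) (z (S k)) (z (S k)) r). fold m in H.
          rewrite pdist_refl in H. rewrite (pdist_sym (z (S k)) m). unfold d. rewrite (pdist_sym (z (S k)) (z k)).
          pose proof (pdist_nonneg m (z (S k))). pose proof (pdist_nonneg (z k) (z (S k))). nra. }
        assert (Q1 : pdist (z (S k)) zbar < rad) by (unfold B in Bk1; nra).
        pose proof (HC (z (S k)) m Q1 Hm1). nra.
      + intros r. set (m := mix_v (z k) (z (S k)) r (snd (z (S k)) r)).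
        assert (Hm1 : pdist m zbar < rad).
        { pose proof (mixv_zn (z k) (z (S k)) zbar r). fold m in H.
          unfold B in Bk, Bk1. pose proof (pdist_nonneg m zbar). pose proof (pdist_nonneg (z k) zbar). pose proof (pdist_nonneg (z (S k)) zbar).
          assert (pdist m zbar < sqrt 2 * rho); [|lra].
          rewrite <- (sqrt_square (pdist m zbar)) by auto. rewrite <- (sqrt_square rho) by lra. rewrite <- sqrt_mult by nra.
          apply sqrt_lt_1; nra. }
        assert (Hm2 : pdist (z (S k)) m <= d k).
        { pose proof (mixv_zn (z k) (z (S k)) (z (S k)) r). fold m in H.
          rewrite pdist_refl in H. rewrite (pdist_sym (z (S k)) m). unfold d. rewrite (pdist_sym (z (S k)) (z k)).
          pose proof (pdist_nonneg m (z (S k))). pose proof (pdist_nonneg (z k) (z (S k))). nra. }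
        assert (Q1 : pdist (z (S k)) zbar < rad) by (unfold B in Bk1; nra).
        pose proof (HC (z (S k)) m Q1 Hm1). nra.
      + right. unfold K, d. ring. }
  set (ph := fun k => phi (l k - lbar)).
  assert (Hsk : forall k, 0 < l k - lbar /\ below eta (l k - lbar)) by (intros k; destruct (Hlk k); split; [lra|auto]).
  assert (below_mono : forall s t, 0 <= t <= s -> below eta s -> below eta t).
  { intros s t Ht Hs. destruct eta; simpl in *; auto; lra. }
  assert (TAN : forall k, phi (l (S k) - lbar) <= phi (l k - lbar) + dphi (l k - lbar) * (l (S k) - l k)).
  { intros k. destruct (Hsk k) as [A1 A2]. destruct (Hsk (S k)) as [B1 B2].
    destruct (Hdphi _ A1 A2) as [D1 D2].
    pose proof (tangent phi dphi eta (l k - lbar) (l (S k) - lbar) Hconc D1 ltac:(lra) A2 ltac:(lra) B2).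
    replace (l (S k) - lbar - (l k - lbar)) with (l (S k) - l k) in H by ring. exact H. }
  assert (PHMON : forall k, ph (S k) <= ph k).
  { intros k. unfold ph. pose proof (TAN k). destruct (Hsk k) as [A1 A2]. destruct (Hdphi _ A1 A2) as [D1 D2].
    pose proof (DEC k). nra. }
  assert (PHPOS : forall k, 0 <= ph k).
  { intros k. unfold ph. destruct (Hsk k). apply Hphipos; auto; lra. }
  assert (REC : forall k, B k -> B (S k) -> 2 * d (S k) <= M * (ph (S k) - ph (S (S k))) + d k).
  { intros k Bk Bk1. destruct (SG k Bk Bk1) as [Fr Nw].
    destruct (Hsk (S k)) as [A1 A2]. destruct (Hdphi _ A1 A2) as [D1 D2].
    assert (KL1 : 1 <= dphi (l (S k) - lbar) * pnorm (wvec gQ (z k) (z (S k)) (lam k) (mu k))).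
    { apply (HKLi (z (S k)) (l (S k)) lbar (HU _ Bk1) Hlbar (Hl (S k)) ltac:(lra) A2).
      apply frechet_limiting. exact Fr. }
    pose proof (TAN (S k)). pose proof (SD (S k)). unfold ph.
    set (X := phi (l (S k) - lbar) - phi (l (S (S k)) - lbar)).
    set (D' := dphi (l (S k) - lbar)) in *.
    set (dd := d (S k)) in *. set (d0 := d k) in *.
    set (pw := pnorm (wvec gQ (z k) (z (S k)) (lam k) (mu k))) in *.
    assert (E1 : D' * (l (S k) - l (S (S k))) <= X) by (unfold X; lra).
    assert (E2 : dd * dd <= 2 * rp * (l (S k) - l (S (S k)))).
    { assert (dd * dd = 2 * rp * (/ (2 * rp) * (dd * dd))) by (field; lra). nra. }
    assert (E3 : 1 <= D' * (K * d0)) by (pose proof (Rmult_le_compat_l D' _ _ (Rlt_le _ _ D2) Nw); lra).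
    assert (E4 : dd * dd * D' <= 2 * rp * X) by nra.
    assert (Xp : 0 <= X) by (pose proof (DEC (S k)); nra).
    assert (E5 : dd * dd <= M * X * d0).
    { assert (T1 : 0 <= 2 * rp * X) by nra.
      assert (T2 : 2 * rp * X * 1 <= 2 * rp * X * (D' * (K * d0))) by (apply Rmult_le_compat_l; auto).
      assert (T3 : dd * dd * D' <= (M * X * d0) * D') by (unfold M; nra).
      apply (Rmult_le_reg_r D'); auto. }
    pose proof (Hdn (S k)). pose proof (Hdn k). fold dd d0 in H1, H2.
    assert (0 <= M * X) by nra.
    set (Y := M * X) in *.
    assert (T4 : 4 * (dd * dd) <= (Y + d0) * (Y + d0)) by (pose proof (sq_nonneg' (Y - d0)); nra).
    destruct (Rle_dec (2 * dd) (Y + d0)); auto.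
    assert ((Y + d0) * (Y + d0) < (2 * dd) * (2 * dd)) by (apply Rmult_le_0_lt_compat; lra). lra. }
  assert (PSB : forall k n, (forall j, (j <= k + n)%nat -> B j) ->
     nsum n (fun j => d (k + 1 + j)%nat) + d (k + n)%nat <= M * (ph (k + 1)%nat - ph (k + 1 + n)%nat) + d k).
  { intros k n. induction n; intros HB.
    - simpl. rewrite !Nat.add_0_r. lra.
    - simpl nsum. pose proof (IHn (fun j Hj => HB j ltac:(lia))).
      pose proof (REC (k + n)%nat (HB (k+n)%nat ltac:(lia)) (HB (S (k+n)) ltac:(lia))).
      replace (k + 1 + n)%nat with (S (k + n)) in * by lia.
      replace (k + S n)%nat with (S (k + n)) by lia.
      replace (k + 1 + S n)%nat with (S (S (k + n))) by lia. lra. }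
  assert (BALL : forall N j, (j <= N)%nat -> B j).
  { assert (B0 : B 0%nat).
    { unfold B. pose proof (PHPOS 0%nat). unfold ph in H. pose proof (sqrt_pos (2 * rp)). pose proof (sqrt_pos (l 0%nat - lbar)). nra. }
    induction N; intros j Hj.
    - replace j with 0%nat by lia. exact B0.
    - destruct (Nat.eq_dec j (S N)) as [E|E]; [|apply IHN; lia]. subst j.
      pose proof (PSB 0%nat N (fun j Hj => IHN j ltac:(lia))) as P1.
      unfold B. pose proof (chain_dist z zbar (S N)) as P2. fold d in P2.
      rewrite nsum_shift in P2. simpl in P1, P2.
      pose proof (Dbound 0%nat). pose proof (PHMON 0%nat). pose proof (PHPOS (S N)).
      pose proof (Hdn N). unfold ph in *.
      pose proof (sqrt_pos (2 * rp)). pose proof (sqrt_pos (l 0%nat - lbar)).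
      assert (M * (phi (l 1%nat - lbar) - phi (l (S N) - lbar)) <= M * phi (l 0%nat - lbar)) by nra.
      lra. }
  assert (BK : forall k, B k) by (intros k; apply (BALL k k); lia).
  assert (PSB' : forall k n, nsum n (fun j => d (k + 1 + j)%nat) + d (k + n)%nat <= M * (ph (k + 1)%nat - ph (k + 1 + n)%nat) + d k)
    by (intros k n; apply PSB; intros; apply BK).
  assert (TB : forall k n, nsum n (fun j => d (k + 1 + j)%nat) <= M * ph k + sqrt (2 * rp) * sqrt (l k - lbar)).
  { intros k n. pose proof (PSB' k n). pose proof (Hdn (k + n)%nat). pose proof (PHMON k).
    replace (S k) with (k + 1)%nat in H1 by lia. pose proof (PHPOS (k + 1 + n)%nat). pose proof (Dbound k).
    assert (M * (ph (k + 1)%nat - ph (k + 1 + n)%nat) <= M * ph k) by nra. lra. }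
  assert (PART2 : forall k, exists s, infinite_sum (fun j => pdist (z (k + 2 + j)%nat) (z (k + 1 + j)%nat)) s /\
      s <= M * phi (l k - lbar) + sqrt (2 * rp) * sqrt (l k - lbar)).
  { intros k. set (a := fun j => pdist (z (k + 2 + j)%nat) (z (k + 1 + j)%nat)).
    assert (Ea : forall j, a j = d (k + 1 + j)%nat).
    { intros j. unfold a, d. replace (k + 2 + j)%nat with (S (k + 1 + j)) by lia. reflexivity. }
    destruct (mono_cv (fun N => sum_f_R0 a N) (M * ph k + sqrt (2 * rp) * sqrt (l k - lbar))) as [s [Hs Hsb]].
    - intros n. simpl. rewrite Ea. pose proof (Hdn (k + 1 + S n)%nat). lra.
    - intros n. rewrite sum_nsum. rewrite (nsum_ext _ _ (fun j => d (k + 1 + j)%nat)) by apply Ea. apply TB.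
    - exists s. split; [exact Hs|exact Hsb]. }
  destruct (mono_cv (fun N => nsum N d) (d 0%nat + (M * ph 0%nat + sqrt (2 * rp) * sqrt (l 0%nat - lbar)))) as [Sinf [HSinf _]].
  { intros n. simpl. pose proof (Hdn n). lra. }
  { intros n. pose proof (nsum_mono n (S n) d Hdn ltac:(lia)). rewrite nsum_shift in H.
    pose proof (TB 0%nat n). simpl in H0. lra. }
  pose proof (CV_Cauchy _ (exist _ Sinf HSinf)) as HCa.
  assert (Hcau : forall i, Cauchy_crit (fun k => coord (z k) i)).
  { intros i eps He. destruct (HCa eps He) as [N HN]. exists N. intros n m Hn Hm.
    specialize (HN n m Hn Hm). unfold R_dist in *.
    pose proof (pdist_coord (z n) (z m) i).
    destruct (Nat.le_gt_cases n m) as [l0|l0].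
    - pose proof (chain_dist2 z n m l0). rewrite pdist_sym in H0. fold d in H0.
      pose proof (Rle_abs (- (nsum n d - nsum m d))). rewrite Rabs_Ropp in H1. lra.
    - pose proof (chain_dist2 z m n ltac:(lia)). fold d in H0.
      pose proof (Rle_abs (nsum n d - nsum m d)). lra. }
  set (zs := ofc (fun i => proj1_sig (R_complete _ (Hcau i)))).
  assert (Hzc : forall i, Un_cv (fun k => coord (z k) i) (coord zs i)).
  { intros i. unfold zs. rewrite coord_ofc. apply (proj2_sig (R_complete _ (Hcau i))). }
  assert (Hzs : Un_cv (fun k => pdist (z k) zs) 0).
  { pose proof (PS_cv (fun k i => (coord (z k) i - coord zs i) * (coord (z k) i - coord zs i)) (fun _ => 0 * 0)) as X.
    rewrite (PS_ext (fun _ => 0 * 0) (fun _ => 0)) in X by (intros; ring). rewrite PS_zero in X.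
    apply sqrt_cv0 in X; [exact X| intros; apply PS_sq_nonneg|].
    intros i. apply CV_mult; apply cv_minus_const; apply Hzc. }
  assert (Hd0 : Un_cv d 0).
  { apply (cv0_le _ (fun k => nsum (S k) d - nsum k d)).
    - intros k; simpl. pose proof (Hdn k). lra.
    - replace 0 with (Sinf - Sinf) by ring. apply CV_minus; [exact (cv_shift _ _ HSinf) | exact HSinf]. }
  assert (Hl0 : forall k, l k <= l 0%nat).
  { induction k; [lra|]. pose proof (DEC k); lra. }
  assert (Hlsc : LS (fun k => L (z k)) (L zs)).
  { unfold L, Lfun. apply LS_plus; [apply LS_plus|].
    - apply LS_efsum. intros r. destruct (Hf r) as [_ Hls]. intros c Hc.
      exact (Hls (fst zs r) (fun k => fst (z k) r) (cv0_le _ _ (fun k => conj (vdist_nonneg _ _ _) (vdist_fst_le (z k) zs r)) Hzs) c Hc).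
    - apply LS_cv. apply (cv_pdist_Q Q gQ HQ1 z zs Hzs).
    - apply LS_efsum. intros r. destruct (Hg r) as [_ Hls]. intros c Hc.
      exact (Hls (snd zs r) (fun k => snd (z k) r) (cv0_le _ _ (fun k => conj (vdist_nonneg _ _ _) (vdist_snd_le (z k) zs r)) Hzs) c Hc). }
  destruct (L zs) as [fx|] eqn:EL.
  2:{ exfalso. destruct (Hlsc (l 0%nat + 1) I) as [N HN]. specialize (HN N (le_n _)).
      rewrite Hl in HN. simpl in HN. specialize (Hl0 N). lra. }
  pose proof EL as EL'. unfold L, Lfun in EL'.
  apply eplus_some_inv in EL' as [x1 [y1 [X1 [X2 X3]]]].
  apply eplus_some_inv in X1 as [s1 [q1 [X4 [X5 X6]]]]. inversion X5; subst q1.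
  destruct (efsum_some _ _ _ X4) as [bfs [Hbfs Hs1]].
  destruct (efsum_some _ _ _ X2) as [bgs [Hbgs Hy1]].
  assert (Hpz : forall k, 0 <= pdist (z k) zs) by (intros; apply pdist_nonneg).
  assert (Hpz1 : Un_cv (fun k => pdist (z (S k)) zs) 0) by exact (cv_shift _ _ Hzs).
  assert (Hrm : 0 < rm) by lra.
  assert (Eseq : forall (m1 m2 : nat -> pt Rb n1 n2),
     (forall k, pdist (m1 k) zs * pdist (m1 k) zs <= pdist (z k) zs * pdist (z k) zs + pdist (z (S k)) zs * pdist (z (S k)) zs) ->
     (forall k, pdist (m2 k) zs * pdist (m2 k) zs <= pdist (z k) zs * pdist (z k) zs + pdist (z (S k)) zs * pdist (z (S k)) zs) ->
     Un_cv (fun k => Rabs (Q (m1 k) - Q zs) + Rabs (Q (m2 k) - Q zs) + / (2 * rm) * (pdist (z k) zs * pdist (z k) zs)) 0).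
  { intros m1 m2 H1 H2. replace 0 with (0 + 0 + / (2 * rm) * (0 * 0)) by ring.
    apply CV_plus; [apply CV_plus|].
    - apply cv_abs0, cv_minus_const. apply (cv_pdist_Q Q gQ HQ1). apply (mix_cv _ _ _ _ H1); auto; intros; apply pdist_nonneg.
    - apply cv_abs0, cv_minus_const. apply (cv_pdist_Q Q gQ HQ1). apply (mix_cv _ _ _ _ H2); auto; intros; apply pdist_nonneg.
    - apply CV_mult; [apply cv_const|]. apply CV_mult; exact Hzs. }
  assert (USf : forall r, US (fun k => f r (fst (z (S k)) r)) (bfs r)).
  { intros r eps He.
    pose proof (Eseq (fun k => mix_u (z k) (z (S k)) r (fst zs r)) (fun k => mix_u (z k) (z (S k)) r (fst (z (S k)) r))
       (fun k => mixu_x (z k) (z (S k)) zs r) (fun k => mixu_zn (z k) (z (S k)) zs r)) as HE.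
    destruct (HE eps He) as [N HN]. exists N. intros k Hk. specialize (HN k Hk).
    unfold R_dist in HN. rewrite Rminus_0_r in HN.
    destruct (step_keys f Q g (z k) (z (S k)) (lam k) (mu k) rp (l k) (HA k) (Hl' k) (Hm' k) (Hl k) r) as [[a [Ea Ka]] _].
    rewrite Ea. simpl. specialize (Ka (fst zs r) (bfs r) (Hbfs r)).
    pose proof (vnorm2_nonneg _ (vsub (fst (z (S k)) r) (fst (z k) r))).
    assert (0 <= / (2 * lam k r)) by (specialize (Hlam k r); apply Rlt_le, Rinv_0_lt_compat; lra).
    assert (P1 : / (2 * lam k r) * vnorm2 (vsub (fst zs r) (fst (z k) r)) <= / (2 * rm) * (pdist (z k) zs * pdist (z k) zs)).
    { rewrite <- vdist_sq. pose proof (vdist_fst_le zs (z k) r) as V1. pose proof (vdist_nonneg _ (fst zs r) (fst (z k) r)) as V2.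
      rewrite pdist_sym in V1. specialize (Hlam k r).
      assert (/ (2 * lam k r) <= / (2 * rm)) by (apply Rinv_le_contravar; lra).
      assert (0 <= / (2 * rm)) by (apply Rlt_le, Rinv_0_lt_compat; lra).
      apply Rmult_le_compat; try nra. }
    set (A1 := Q (mix_u (z k) (z (S k)) r (fst zs r)) - Q zs) in *.
    set (A2 := Q (mix_u (z k) (z (S k)) r (fst (z (S k)) r)) - Q zs) in *.
    pose proof (Rle_abs A1) as W1. pose proof (Rle_abs (- A2)) as W2. rewrite Rabs_Ropp in W2.
    assert (HH: 0 <= Rabs A1 + Rabs A2 + / (2 * rm) * (pdist (z k) zs * pdist (z k) zs)).
    { pose proof (Rabs_pos A1). pose proof (Rabs_pos A2). assert (0 <= / (2 * rm)) by (apply Rlt_le, Rinv_0_lt_compat; lra).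
      pose proof (sq_nonneg' (pdist (z k) zs)). nra. }
    rewrite Rabs_right in HN by lra. unfold A1, A2 in *. nra. }
  assert (USg : forall r, US (fun k => g r (snd (z (S k)) r)) (bgs r)).
  { intros r eps He.
    pose proof (Eseq (fun k => mix_v (z k) (z (S k)) r (snd zs r)) (fun k => mix_v (z k) (z (S k)) r (snd (z (S k)) r))
       (fun k => mixv_x (z k) (z (S k)) zs r) (fun k => mixv_zn (z k) (z (S k)) zs r)) as HE.
    destruct (HE eps He) as [N HN]. exists N. intros k Hk. specialize (HN k Hk).
    unfold R_dist in HN. rewrite Rminus_0_r in HN.
    destruct (step_keys f Q g (z k) (z (S k)) (lam k) (mu k) rp (l k) (HA k) (Hl' k) (Hm' k) (Hl k) r) as [_ [a [Ea Ka]]].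
    rewrite Ea. simpl. specialize (Ka (snd zs r) (bgs r) (Hbgs r)).
    pose proof (vnorm2_nonneg _ (vsub (snd (z (S k)) r) (snd (z k) r))).
    assert (0 <= / (2 * mu k r)) by (specialize (Hmu k r); apply Rlt_le, Rinv_0_lt_compat; lra).
    assert (P1 : / (2 * mu k r) * vnorm2 (vsub (snd zs r) (snd (z k) r)) <= / (2 * rm) * (pdist (z k) zs * pdist (z k) zs)).
    { rewrite <- vdist_sq. pose proof (vdist_snd_le zs (z k) r) as V1. pose proof (vdist_nonneg _ (snd zs r) (snd (z k) r)) as V2.
      rewrite pdist_sym in V1. specialize (Hmu k r).
      assert (/ (2 * mu k r) <= / (2 * rm)) by (apply Rinv_le_contravar; lra).
      assert (0 <= / (2 * rm)) by (apply Rlt_le, Rinv_0_lt_compat; lra).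
      apply Rmult_le_compat; try nra. }
    set (A1 := Q (mix_v (z k) (z (S k)) r (snd zs r)) - Q zs) in *.
    set (A2 := Q (mix_v (z k) (z (S k)) r (snd (z (S k)) r)) - Q zs) in *.
    pose proof (Rle_abs A1) as W1. pose proof (Rle_abs (- A2)) as W2. rewrite Rabs_Ropp in W2.
    assert (HH: 0 <= Rabs A1 + Rabs A2 + / (2 * rm) * (pdist (z k) zs * pdist (z k) zs)).
    { pose proof (Rabs_pos A1). pose proof (Rabs_pos A2). assert (0 <= / (2 * rm)) by (apply Rlt_le, Rinv_0_lt_compat; lra).
      pose proof (sq_nonneg' (pdist (z k) zs)). nra. }
    rewrite Rabs_right in HN by lra. unfold A1, A2 in *. nra. }
  assert (USL : US (fun k => L (z (S k))) fx).
  { unfold L, Lfun. rewrite X3, X6, Hs1, Hy1. apply US_plus; [apply US_plus|].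
    - apply US_efsum. exact USf.
    - apply US_cv. apply (cv_pdist_Q Q gQ HQ1 (fun k => z (S k)) zs Hpz1).
    - apply US_efsum. exact USg. }
  assert (Hlcv : Un_cv (fun k => l (S k)) fx).
  { intros eps He. destruct (Hlsc (fx - eps) ltac:(simpl; lra)) as [N1 H1].
    destruct (USL (eps/2) ltac:(lra)) as [N2 H2]. exists (N1 + N2)%nat. intros k Hk.
    specialize (H1 (S k) ltac:(lia)). specialize (H2 k ltac:(lia)). rewrite Hl in H1, H2. simpl in H1, H2.
    unfold R_dist. apply Rabs_def1; lra. }
  split.
  - exists zs. split; [exact Hzs|]. exists fx. split; [exact EL|].
    exists (fun k => z (S k)), (fun k => wvec gQ (z k) (z (S k)) (lam k) (mu k)), (fun k => l (S k)).
    split; [intros k; apply Hl|]. split; [exact Hpz1|]. split; [exact Hlcv|].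
    split; [intros k; apply (SG k (BK k) (BK (S k)))|].
    apply (cv0_le _ (fun k => K * d k)).
    + intros k. rewrite pdist_pzero. split; [rewrite pnorm_Nm; apply Nm_nonneg|]. apply (SG k (BK k) (BK (S k))).
    + replace 0 with (K * 0) by ring. apply CV_mult; [apply cv_const|exact Hd0].
  - intros k. split; [apply BK|]. apply PART2.
Qed.
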